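(* Let $\mathcal R$ be a strong CCTRS and $s,t\in\mathcal T(\mathcal G,\mathcal V)$. (1) If $s\rightharpoonup^* t$ is a complexity-conscious reduction with cost $N$, then there is a context-sensitive reduction $\zeta(s)\to^*_{\Xi(\mathcal R),\mu}\zeta(t)$ with cost $N$. (2) If $s\rightharpoonup^\infty$, then there is an infinite $(\Xi(\mathcal R),\mu)$-reduction starting from $\zeta(s)$.
   Context: A CCTRS over $\mathcal F$ is a set $\mathcal R$ of conditional rules each of the form $f(\ell_1,\dots,\ell_n)\to r\Leftarrow a_1\approx b_1,\dots,a_k\approx b_k$ (defined symbols are roots of left-hand sides, others constructors; constructor terms contain only constructors and variables) where $\ell_1,\dots,\ell_n,b_1,\dots,b_k$ are constructor terms, the terms $f(\ell_1,\dots,\ell_n),b_1,\dots,b_k$ pairwise share no variables, $\mathrm{Var}(r)\subseteq\mathrm{Var}(\ell_1,\dots,\ell_n,b_1,\dots,b_k)$, and $\mathrm{Var}(a_i)\subseteq\mathrm{Var}(\ell_1,\dots,\ell_n,b_1,\dots,b_{i-1})$. $\mathcal R{\restriction}f$ is the set of rules with left-hand root $f$. A strong CCTRS is a CCTRS with each $\mathcal R{\restriction}f$ finite and each $f(\ell_1,\dots,\ell_n)$ and $b_j$ linear. Let $m_f=|\mathcal R{\restriction}f|$ (0 for constructors), with fixed enumeration $\rho^f_1,\dots,\rho^f_{m_f}$. Labeled reduction: $\mathcal G$ consists of the constructors and symbols $f_R$ ($R\subseteq\mathcal R{\restriction}f$, same arity as $f$); $\mathrm{label}$ replaces each defined $f$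 by $f_{\mathcal R\restriction f}$; $\mathrm{erase}$ removes labels; labeled normal forms are terms over constructors, symbols $f_\emptyset$ and variables. $s\rightharpoonup t$ is defined inductively: either (i, ''$\bot$-step'') there are $p$ and a rule $\rho\colon\ell\to r\Leftarrow c$ with $s|_p=f_R(s_1,\dots,s_n)$, $\rho\in R$, $t=s[f_{R\setminus\{\rho\}}(s_1,\dots,s_n)]_p$, and linear labeled normal forms $u_1,\dots,u_n$ on fresh variables and $\sigma$ with $s|_p=f_R(u_1,\dots,u_n)\sigma$ and $f(\mathrm{erase}(u_1),\dots,\mathrm{erase}(u_n))$ not unifiable with $\ell$; or (ii) there are $p$, $\rho\colon f(\ell_1,\dots,\ell_n)\to r\Leftarrow a_1\approx b_1,\dots,a_k\approx b_k$, $\sigma$, $0\le j\le k$ with $s|_p=f_R(\ell_1\sigma,\dots,\ell_n\sigma)$, $\rho\in R$, $\mathrm{label}(a_i)\sigma\rightharpoonup^*b_i\sigma$ for $1\le i\le j$, and either (successful) $j=k$, $t=s[\mathrm{label}(r)\sigma]_p$, or (failed) $j<k$, $\mathrm{label}(a_{j+1})\sigma\rightharpoonup^*u\tau$ for a linear labeled normal form $u$ with $\mathrm{erase}(u)$ not unifiable with $b_{j+1}$, and $t=s[f_{R\setminus\{\rho\}}(\ell_1\sigma,\dots,\ell_n\sigma)]_p$. A complexity-conscious reduction is a labeled reduction together with chosen witnessing condition reductions; its cost is the sum of its step costs, where a $\bot$-step costs $0$, a successful step costs $1$ plus the costs of the $k$ condition reductions, and a failed step costs the sum of the costs of the $j$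 condition reductions and of $\mathrm{label}(a_{j+1})\sigma\rightharpoonup^*u\tau$. $s\rightharpoonup_\rhd t$ if there are $p$, $\rho$ as in (ii), $\sigma$, $0\le j<k$ with $s|_p=f_R(\ell_1\sigma,\dots,\ell_n\sigma)$, $\rho\in R$, $\mathrm{label}(a_i)\sigma\rightharpoonup^*b_i\sigma$ for $i\le j$, and $t=\mathrm{label}(a_{j+1})\sigma$; $s\rightharpoonup^\infty$ means an infinite sequence of $\rightharpoonup\cup\rightharpoonup_\rhd$ steps from $s$. The transformed system: signature $\mathcal H$ with constants $\bot,\top$ ($\mu=\emptyset$); every $f\in\mathcal F$ of arity $n$ as a symbol of arity $n+m_f$ with $\mu(f)=\{1,\dots,n\}$; and for every defined $f$ of arity $n$, every $\rho^f_i$ with $k>0$ conditions and $1\le j\le k$ a symbol $f_i^j$ of arity $n+m_f+j-1$ with $\mu(f_i^j)=\{n+i+j-1\}$. A position is active in $t$ if it is $\epsilon$ or $iq$ with $i\in\mu(\mathrm{root}(t))$ and $q$ active in $t|_i$; $\to_{\Xi(\mathcal R),\mu}$ rewrites only at active positions. $\xi_\star$ ($\star\in\{\bot,\top\}$): identity on variables, homomorphic on constructors, $f(t_1..t_n)\mapsto f(\xi_\star(t_1),\dots,\xi_\star(t_n),\star,\dots,\star)$ ($m_f$ copies) for defined $f$; $\bot$-patterns are linear terms $\xi_\bot(t)$. For a linear constructor term $t$: $\mathrm{AP}(x)=\emptyset$, and $\mathrm{AP}(f(t_1,\dots,t_n))$ consists of $g(x_1,\dots,x_m)$ for every constructor $g\neq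 f$ of arity $m$, $g(x_1,\dots,x_m,\bot,\dots,\bot)$ for every defined $g$ of arity $m$, and $f(x_1,\dots,x_{i-1},u,x_{i+1},\dots,x_n)$ for $u\in\mathrm{AP}(t_i)$ (fresh distinct $x$'s). Notation: $\langle t_1,\dots,t_n\rangle[u_1,\dots,u_j]_i$ is $t_1,\dots,t_{i-1},u_1,\dots,u_j,t_{i+1},\dots,t_n$. For the $i$-th rule $\rho_i\colon f(\vec\ell)\to r\Leftarrow a_1\approx b_1,\dots,a_k\approx b_k$ of $\mathcal R{\restriction}f$ and fresh distinct $x_1,\dots,x_{m_f},y_1,\dots,y_n$, $\Xi(\mathcal R)$ contains: $(1)$ if $k=0$: $f(\vec\ell,\langle\vec x\rangle[\top]_i)\to\xi_\top(r)$; if $k>0$: $(2)$ $f(\vec\ell,\langle\vec x\rangle[\top]_i)\to f_i^1(\vec\ell,\langle\vec x\rangle[\xi_\top(a_1)]_i)$, $(3)$ $f_i^k(\vec\ell,\langle\vec x\rangle[b_1,\dots,b_k]_i)\to\xi_\top(r)$, $(4)$ for $1\le j<k$: $f_i^j(\vec\ell,\langle\vec x\rangle[b_1,\dots,b_j]_i)\to f_i^{j+1}(\vec\ell,\langle\vec x\rangle[b_1,\dots,b_j,\xi_\top(a_{j+1})]_i)$, $(5)$ for $1\le j\le k$ and $v\in\mathrm{AP}(b_j)$ (fresh variables): $f_i^j(\vec\ell,\langle\vec x\rangle[b_1,\dots,b_{j-1},v]_i)\to f(\vec\ell,\langle\vec x\rangle[\bot]_i)$; and for any $k$: $(6)$ for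 $1\le j\le n$ and $v\in\mathrm{AP}(\ell_j)$ (fresh variables): $f(\langle\vec y\rangle[v]_j,\langle\vec x\rangle[\top]_i)\to f(\langle\vec y\rangle[v]_j,\langle\vec x\rangle[\bot]_i)$. The cost of a $(\Xi(\mathcal R),\mu)$-reduction is the number of steps using rules of type (1) or (3). The map $\zeta\colon\mathcal T(\mathcal G,\mathcal V)\to\mathcal T(\mathcal H,\mathcal V)$: identity on variables, homomorphic on constructors, $\zeta(f_R(t_1,\dots,t_n))=f(\zeta(t_1),\dots,\zeta(t_n),c_1,\dots,c_{m_f})$ with $c_i=\top$ iff $\rho^f_i\in R$, else $\bot$. *)

(* Defs.v *)
From Stdlib Require Import List Arith.
Import ListNotations.


Inductive term (S : Type) : Type :=
| Var (x : nat)
| App (g : S) (args : list (term S)).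
Arguments Var {S} x.
Arguments App {S} g args.

Fixpoint subst {S : Type} (sigma : nat -> term S) (t : term S) : term S :=
  match t with
  | Var x => sigma x
  | App g args => App g (map (subst sigma) args)
  end.

Fixpoint vars {S : Type} (t : term S) : list nat :=
  match t with
  | Var x => [x]
  | App _ args => flat_map vars args
  end.

Definition vars_list {S : Type} (ts : list (term S)) : list nat := flat_map vars ts.

Definition linear {S : Type} (t : term S) : Prop := NoDup (vars t).

Definition disjoint (l1 l2 : list nat) : Prop := forall x, In x l1 -> ~ In x l2.

Definition unifiable {S : Type} (s t : term S) : Prop :=
  exists theta : nat -> term S, subst theta s = subst theta t.

Inductive wf {S : Type} (arS : S -> nat) (valid : S -> Prop) : term S -> Prop :=
| wf_var x : wf arS valid (Var x)
| wf_app g args : valid g -> length args = arS g -> Forall (wf arS valid) args ->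
    wf arS valid (App g args).

(* a conditional rule  f(l_1..l_n) -> r <= a_1 ~ b_1, ..., a_k ~ b_k ;
   the root f is given by the list in which the rule is stored *)
Record rule (F : Type) := mkRule {
  r_args : list (term F);
  r_rhs : term F;
  r_conds : list (term F * term F) }.
Arguments r_args {F} r.
Arguments r_rhs {F} r.
Arguments r_conds {F} r.

(* A system: signature F with arities, and for every f the fixed enumeration
   rho^f_1, ..., rho^f_{m_f} of R|f (finite, as required of a strong CCTRS). *)
Record system := mkSystem {
  fs : Type;
  ar : fs -> nat;
  rules : fs -> list (rule fs) }.

Definition fterm (Sy : system) := term (fs Sy).

(* m_f = |R|f| ; constructors are exactly the symbols with m_f = 0 *)
Definition m (Sy : system) (f : fs Sy) : nat := length (rules Sy f).

Definition wf_f (Sy : system) (t : fterm Sy) : Prop := wf (ar Sy) (fun _ => True) t.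

Inductive cterm (Sy : system) : fterm Sy -> Prop :=
| ct_var x : cterm Sy (Var x)
| ct_app c args : m Sy c = 0 -> Forall (cterm Sy) args -> cterm Sy (App c args).

Definition pairwise_disjoint (ls : list (list nat)) : Prop :=
  forall i j, i < length ls -> j < length ls -> i <> j ->
    disjoint (nth i ls []) (nth j ls []).

Definition cctrs_rule (Sy : system) (f : fs Sy) (rho : rule (fs Sy)) : Prop :=
  let ls := r_args rho in
  let cs := r_conds rho in
  let bs := map snd cs in
  length ls = ar Sy f /\ Forall (wf_f Sy) ls /\ wf_f Sy (r_rhs rho) /\
  Forall (fun ab => wf_f Sy (fst ab) /\ wf_f Sy (snd ab)) cs /\
  Forall (cterm Sy) ls /\ Forall (cterm Sy) bs /\
  linear (App f ls) /\ Forall linear bs /\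
  pairwise_disjoint (vars (App f ls) :: map vars bs) /\
  incl (vars (r_rhs rho)) (vars_list ls ++ vars_list bs) /\
  (* Var(a_i) subset Var(l, b_1..b_{i-1})   (0-based index i here) *)
  (forall i a b, nth_error cs i = Some (a, b) ->
     incl (vars a) (vars_list ls ++ vars_list (firstn i bs))).

Definition strong_cctrs (Sy : system) : Prop :=
  forall f : fs Sy, NoDup (rules Sy f) /\ Forall (cctrs_rule Sy f) (rules Sy f).

(* f_R is (f, R) with R a bit vector of length m_f: bit i (0-based) says
   rho^f_{i+1} is in R.  Constructors c are (c, []) (= c_emptyset). *)
Definition gsym (Sy : system) : Type := (fs Sy * list bool)%type.
Definition gterm (Sy : system) := term (gsym Sy).

Definition wf_g (Sy : system) (t : gterm Sy) : Prop :=
  wf (fun g : gsym Sy => ar Sy (fst g)) (fun g => length (snd g) = m Sy (fst g)) t.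

Fixpoint label (Sy : system) (t : fterm Sy) : gterm Sy :=
  match t with
  | Var x => Var x
  | App f args => App (f, repeat true (m Sy f)) (map (label Sy) args)
  end.

Fixpoint erase (Sy : system) (t : gterm Sy) : fterm Sy :=
  match t with
  | Var x => Var x
  | App g args => App (fst g) (map (erase Sy) args)
  end.

Inductive lnf (Sy : system) : gterm Sy -> Prop :=
| lnf_var x : lnf Sy (Var x)
| lnf_app f R args : Forall (fun b => b = false) R -> Forall (lnf Sy) args ->
    lnf Sy (App (f, R) args).

(* R \ {rho_{i+1}} : clear bit i *)
Fixpoint clear_bit (R : list bool) (i : nat) : list bool :=
  match R, i with
  | [], _ => []
  | _ :: R', 0 => false :: R'
  | b :: R', S i' => b :: clear_bit R' i'
  end.

Definition lhs_inst (Sy : system) (f : fs Sy) (R : list bool) (rho : rule (fs Sy))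
  (sigma : nat -> gterm Sy) : gterm Sy :=
  App (f, R) (map (fun l => subst sigma (label Sy l)) (r_args rho)).

(* lstep s t c : a labeled step s -> t with cost c (with chosen witnesses);
   lsteps : -> * with total cost; lconds sigma cs costs : the conditions cs
   are satisfied, label(a_i) sigma ->* b_i sigma, with the given costs *)
Inductive lstep (Sy : system) : gterm Sy -> gterm Sy -> nat -> Prop :=
| ls_bot f R i rho us (sigma : nat -> gterm Sy) :
    nth_error (rules Sy f) i = Some rho -> nth i R false = true ->
    Forall (lnf Sy) us -> NoDup (vars_list us) ->
    disjoint (vars_list us) (vars_list (r_args rho)) ->
    ~ unifiable (App f (map (erase Sy) us)) (App f (r_args rho)) ->
    lstep Sy (App (f, R) (map (subst sigma) us))
             (App (f, clear_bit R i) (map (subst sigma) us)) 0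
| ls_succ f R i rho sigma costs :
    nth_error (rules Sy f) i = Some rho -> nth i R false = true ->
    lconds Sy sigma (r_conds rho) costs ->
    lstep Sy (lhs_inst Sy f R rho sigma) (subst sigma (label Sy (r_rhs rho)))
          (S (list_sum costs))
| ls_fail f R i rho sigma j costs a b u tau c :
    nth_error (rules Sy f) i = Some rho -> nth i R false = true ->
    lconds Sy sigma (firstn j (r_conds rho)) costs ->
    nth_error (r_conds rho) j = Some (a, b) ->
    lnf Sy u -> linear u -> disjoint (vars u) (vars b) ->
    ~ unifiable (erase Sy u) b ->
    lsteps Sy (subst sigma (label Sy a)) (subst tau u) c ->
    lstep Sy (lhs_inst Sy f R rho sigma)
             (lhs_inst Sy f (clear_bit R i) rho sigma) (list_sum costs + c)
| ls_ctx g pre a a' post c :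
    lstep Sy a a' c ->
    lstep Sy (App g (pre ++ a :: post)) (App g (pre ++ a' :: post)) c
with lsteps (Sy : system) : gterm Sy -> gterm Sy -> nat -> Prop :=
| lss_refl s : lsteps Sy s s 0
| lss_cons s u t c1 c2 : lstep Sy s u c1 -> lsteps Sy u t c2 -> lsteps Sy s t (c1 + c2)
with lconds (Sy : system) : (nat -> gterm Sy) -> list (fterm Sy * fterm Sy) -> list nat -> Prop :=
| lc_nil sigma : lconds Sy sigma [] []
| lc_cons sigma a b rest c costs :
    lsteps Sy (subst sigma (label Sy a)) (subst sigma (label Sy b)) c ->
    lconds Sy sigma rest costs ->
    lconds Sy sigma ((a, b) :: rest) (c :: costs).

(* s ->_|> t : t = label(a_{j+1}) sigma for a redex at some position of s whose
   first j conditions hold (j < k) *)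
Inductive lsub (Sy : system) : gterm Sy -> gterm Sy -> Prop :=
| lsub_here f R i rho sigma j costs a b :
    nth_error (rules Sy f) i = Some rho -> nth i R false = true ->
    lconds Sy sigma (firstn j (r_conds rho)) costs ->
    nth_error (r_conds rho) j = Some (a, b) ->
    lsub Sy (lhs_inst Sy f R rho sigma) (subst sigma (label Sy a))
| lsub_in g args a t : In a args -> lsub Sy a t -> lsub Sy (App g args) t.

Definition linf (Sy : system) (s : gterm Sy) : Prop :=
  exists u : nat -> gterm Sy, u 0 = s /\
    forall n, (exists c, lstep Sy (u n) (u (S n)) c) \/ lsub Sy (u n) (u (S n)).

Inductive hsym (F : Type) : Type :=
| HBot | HTop
| HF (f : F)                 (* f of arity n + m_f *)
| HFij (f : F) (i j : nat).  (* f_i^j of arity n + m_f + j - 1 *)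
Arguments HBot {F}. Arguments HTop {F}. Arguments HF {F} f. Arguments HFij {F} f i j.

Definition hterm (Sy : system) := term (hsym (fs Sy)).

(* replacement map mu, with 1-based argument positions *)
Definition hmu (Sy : system) (g : hsym (fs Sy)) (p : nat) : Prop :=
  match g with
  | HF f => 1 <= p <= ar Sy f
  | HFij f i j => p = ar Sy f + i + j - 1
  | _ => False
  end.

Definition star (Sy : system) (top : bool) : hterm Sy :=
  App (if top then HTop else HBot) [].

(* xi_star : top = true gives xi_top, top = false gives xi_bot *)
Fixpoint xi (Sy : system) (top : bool) (t : fterm Sy) : hterm Sy :=
  match t with
  | Var x => Var x
  | App f args => App (HF f) (map (xi Sy top) args ++ repeat (star Sy top) (m Sy f))
  end.

Fixpoint zeta (Sy : system) (t : gterm Sy) : hterm Sy :=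
  match t with
  | Var x => Var x
  | App g args => App (HF (fst g))
      (map (zeta Sy) args ++ map (fun b : bool => star Sy b) (snd g))
  end.

(* <t_1..t_n>[u_1..u_j]_i   (i is 1-based) *)
Definition repl {A : Type} (ts : list A) (i : nat) (us : list A) : list A :=
  firstn (i - 1) ts ++ us ++ skipn i ts.

(* ap t u : u in AP(t) (variables arbitrary; freshness/distinctness is imposed
   by requiring linear left-hand sides in xi_rule) *)
Inductive ap (Sy : system) : fterm Sy -> hterm Sy -> Prop :=
| ap_con f ts g xs : m Sy g = 0 -> g <> f -> length xs = ar Sy g ->
    ap Sy (App f ts) (App (HF g) (map Var xs))
| ap_def f ts g xs : 0 < m Sy g -> length xs = ar Sy g ->
    ap Sy (App f ts) (App (HF g) (map Var xs ++ repeat (star Sy false) (m Sy g)))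
| ap_arg f ts k u xs : k < length ts -> length xs = length ts ->
    ap Sy (nth k ts (Var 0)) u ->
    ap Sy (App f ts) (App (HF f) (firstn k (map Var xs) ++ u :: skipn (S k) (map Var xs))).

(* the rules of Xi(R), tagged with their cost (1 for types (1),(3), else 0);
   i is the 1-based index of rho = rho^f_i, xs are x_1..x_{m_f}, ys are y_1..y_n *)
Inductive xi_raw (Sy : system) : hterm Sy -> hterm Sy -> nat -> Prop :=
| xi_1 f i rho xs :
    1 <= i <= m Sy f -> nth_error (rules Sy f) (i - 1) = Some rho ->
    length xs = m Sy f -> r_conds rho = [] ->
    xi_raw Sy (App (HF f) (map (xi Sy true) (r_args rho) ++ repl (map Var xs) i [star Sy true]))
              (xi Sy true (r_rhs rho)) 1
| xi_2 f i rho xs a1 b1 rest :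
    1 <= i <= m Sy f -> nth_error (rules Sy f) (i - 1) = Some rho ->
    length xs = m Sy f -> r_conds rho = (a1, b1) :: rest ->
    xi_raw Sy (App (HF f) (map (xi Sy true) (r_args rho) ++ repl (map Var xs) i [star Sy true]))
              (App (HFij f i 1) (map (xi Sy true) (r_args rho) ++
                                 repl (map Var xs) i [xi Sy true a1])) 0
| xi_3 f i rho xs :
    1 <= i <= m Sy f -> nth_error (rules Sy f) (i - 1) = Some rho ->
    length xs = m Sy f -> r_conds rho <> [] ->
    xi_raw Sy (App (HFij f i (length (r_conds rho)))
                   (map (xi Sy true) (r_args rho) ++
                    repl (map Var xs) i (map (xi Sy true) (map snd (r_conds rho)))))
              (xi Sy true (r_rhs rho)) 1
| xi_4 f i rho xs j a b :
    1 <= i <= m Sy f -> nth_error (rules Sy f) (i - 1) = Some rho ->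
    length xs = m Sy f -> 1 <= j < length (r_conds rho) ->
    nth_error (r_conds rho) j = Some (a, b) ->   (* (a,b) = (a_{j+1}, b_{j+1}) *)
    xi_raw Sy (App (HFij f i j)
                   (map (xi Sy true) (r_args rho) ++
                    repl (map Var xs) i (map (xi Sy true) (firstn j (map snd (r_conds rho))))))
              (App (HFij f i (S j))
                   (map (xi Sy true) (r_args rho) ++
                    repl (map Var xs) i (map (xi Sy true) (firstn j (map snd (r_conds rho)))
                                         ++ [xi Sy true a]))) 0
| xi_5 f i rho xs j a b v :
    1 <= i <= m Sy f -> nth_error (rules Sy f) (i - 1) = Some rho ->
    length xs = m Sy f -> 1 <= j <= length (r_conds rho) ->
    nth_error (r_conds rho) (j - 1) = Some (a, b) ->   (* (a,b) = (a_j, b_j) *)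
    ap Sy b v ->
    xi_raw Sy (App (HFij f i j)
                   (map (xi Sy true) (r_args rho) ++
                    repl (map Var xs) i (map (xi Sy true) (firstn (j - 1) (map snd (r_conds rho)))
                                         ++ [v])))
              (App (HF f) (map (xi Sy true) (r_args rho) ++ repl (map Var xs) i [star Sy false])) 0
| xi_6 f i rho xs ys j l v :
    1 <= i <= m Sy f -> nth_error (rules Sy f) (i - 1) = Some rho ->
    length xs = m Sy f -> length ys = ar Sy f -> 1 <= j <= ar Sy f ->
    nth_error (r_args rho) (j - 1) = Some l -> ap Sy l v ->
    xi_raw Sy (App (HF f) (repl (map Var ys) j [v] ++ repl (map Var xs) i [star Sy true]))
              (App (HF f) (repl (map Var ys) j [v] ++ repl (map Var xs) i [star Sy false])) 0.

(* the fresh variables of the construction are distinct and fresh exactly when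
   the left-hand side is linear *)
Definition xi_rule (Sy : system) (l r : hterm Sy) (c : nat) : Prop :=
  linear l /\ xi_raw Sy l r c.

Inductive cs_step (Sy : system) : hterm Sy -> hterm Sy -> nat -> Prop :=
| cs_root l r c (sigma : nat -> hterm Sy) :
    xi_rule Sy l r c -> cs_step Sy (subst sigma l) (subst sigma r) c
| cs_ctx g pre a a' post c :
    hmu Sy g (S (length pre)) -> cs_step Sy a a' c ->
    cs_step Sy (App g (pre ++ a :: post)) (App g (pre ++ a' :: post)) c.

Inductive cs_steps (Sy : system) : hterm Sy -> hterm Sy -> nat -> Prop :=
| css_refl s : cs_steps Sy s s 0
| css_cons s u t c1 c2 : cs_step Sy s u c1 -> cs_steps Sy u t c2 -> cs_steps Sy s t (c1 + c2).

(* Main.v *)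
Require Import Defs.
From Stdlib Require Import List Arith Lia Classical ClassicalEpsilon.
Import ListNotations.

Section TI.
Variable S : Type.
Variable P : term S -> Prop.
Hypothesis HV : forall x, P (Var x).
Hypothesis HA : forall g args, Forall P args -> P (App g args).
Fixpoint term_ind2 (t : term S) : P t :=
  match t with
  | Var x => HV x
  | App g args => HA g args
      ((fix go (l : list (term S)) : Forall P l :=
          match l with [] => Forall_nil _ | a :: l' => Forall_cons _ (term_ind2 a) (go l') end) args)
  end.
End TI.

Lemma vars_App {S} (g : S) args : vars (App g args) = flat_map vars args.
Proof. reflexivity. Qed.

Lemma subst_ext {S} (s1 s2 : nat -> term S) t :
  (forall x, In x (vars t) -> s1 x = s2 x) -> subst s1 t = subst s2 t.
Proof.
  induction t as [x|g args IH] using term_ind2; simpl; intros H.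
  - apply H; auto.
  - f_equal. induction IH; simpl in *; auto.
    f_equal.
    + apply H0; intros; apply H; apply in_or_app; auto.
    + apply IHIH; intros; apply H; apply in_or_app; auto.
Qed.

Lemma subst_subst {S} (s1 s2 : nat -> term S) t :
  subst s2 (subst s1 t) = subst (fun x => subst s2 (s1 x)) t.
Proof.
  induction t as [x|g args IH] using term_ind2; simpl; auto.
  f_equal. rewrite map_map. induction IH; simpl; f_equal; auto.
Qed.

Lemma subst_id {S} (s1 : nat -> term S) t :
  (forall x, In x (vars t) -> s1 x = Var x) -> subst s1 t = t.
Proof.
  induction t as [x|g args IH] using term_ind2; simpl; intros H.
  - apply H; auto.
  - f_equal. induction IH; simpl in *; auto.
    f_equal.
    + apply H0; intros; apply H; apply in_or_app; auto.
    + apply IHIH; intros; apply H; apply in_or_app; auto.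
Qed.

Lemma vars_xi (Sy : system) b t : vars (xi Sy b t) = vars t.
Proof.
  induction t as [x|g args IH] using term_ind2; auto.
  cbn [xi]. rewrite !vars_App, flat_map_app.
  transitivity (flat_map vars (map (xi Sy b) args) ++ []).
  { f_equal. clear. induction (m Sy g); simpl; auto. }
  rewrite app_nil_r. induction IH; simpl; auto. rewrite H. f_equal; auto.
Qed.

Lemma vars_erase (Sy : system) t : vars (erase Sy t) = vars t.
Proof.
  induction t as [x|g args IH] using term_ind2; simpl; auto.
  induction IH; simpl; auto. rewrite H, IHIH; auto.
Qed.

Lemma zeta_subst (Sy : system) s t :
  zeta Sy (subst s t) = subst (fun x => zeta Sy (s x)) (zeta Sy t).
Proof.
  induction t as [x|g args IH] using term_ind2; simpl; auto.
  f_equal. rewrite map_app, !map_map. f_equal.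
  induction IH; simpl; f_equal; auto.
Qed.

Lemma map_star_repeat (Sy : system) b n :
  map (fun b0 : bool => star Sy b0) (repeat b n) = repeat (star Sy b) n.
Proof. induction n; simpl; f_equal; auto. Qed.

Lemma zeta_label (Sy : system) t : zeta Sy (label Sy t) = xi Sy true t.
Proof.
  induction t as [x|g args IH] using term_ind2; simpl; auto.
  f_equal. rewrite map_map, map_star_repeat. f_equal.
  induction IH; simpl; f_equal; auto.
Qed.

Lemma wf_subst {S} arS valid (s : nat -> term S) t :
  wf arS valid t -> (forall x, In x (vars t) -> wf arS valid (s x)) ->
  wf arS valid (subst s t).
Proof.
  induction t as [x|g args IH] using term_ind2; simpl; intros Hw H.
  - apply H; auto.
  - inversion Hw; subst. constructor; auto. rewrite length_map; auto.
    clear H3 Hw. induction IH; simpl in *; constructor; inversion H4; subst.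
    + apply H0; auto. intros; apply H; apply in_or_app; auto.
    + apply IHIH; auto. intros; apply H; apply in_or_app; auto.
Qed.

Lemma wf_subst_inv {S} arS valid (s : nat -> term S) t :
  wf arS valid (subst s t) -> wf arS valid t /\
  (forall x, In x (vars t) -> wf arS valid (s x)).
Proof.
  induction t as [x|g args IH] using term_ind2; simpl; intros Hw.
  - split. constructor. intros y [<-|[]]; auto.
  - inversion Hw as [|g' args' Hv Hl Hf]; subst. rewrite length_map in Hl.
    assert (Forall (wf arS valid) args /\
      (forall x, In x (flat_map vars args) -> wf arS valid (s x))) as [A B].
    { clear Hl Hw. induction IH as [|a l Ha IHl IHIH]; simpl in *. split; auto. intros _ [].
      inversion Hf as [|? ? Hf1 Hf2]; subst. destruct (Ha Hf1). destruct (IHIH Hf2).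
      split. constructor; auto. intros y Hy; apply in_app_or in Hy; destruct Hy; auto. }
    split; auto. constructor; auto.
Qed.

Lemma wf_label (Sy : system) t : wf_f Sy t -> wf_g Sy (label Sy t).
Proof.
  unfold wf_f, wf_g.
  induction t as [x|g args IH] using term_ind2; simpl; intros Hw.
  - constructor.
  - inversion Hw; subst. constructor; simpl.
    + rewrite repeat_length; reflexivity.
    + rewrite length_map; auto.
    + clear H2 Hw. induction IH; simpl; [constructor| inversion H3; subst; constructor; auto].
Qed.

Lemma wf_app_inv {S} arS valid (g : S) args :
  wf arS valid (App g args) -> valid g /\ length args = arS g /\ Forall (wf arS valid) args.
Proof. intros H; inversion H; auto. Qed.

Lemma cs_steps_trans (Sy : system) a b c c1 c2 :
  cs_steps Sy a b c1 -> cs_steps Sy b c c2 -> cs_steps Sy a c (c1 + c2).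
Proof.
  induction 1; intros; simpl; auto.
  rewrite <- Nat.add_assoc. econstructor; eauto.
Qed.

Lemma cs_steps_eq (Sy : system) a b c c' :
  cs_steps Sy a b c -> c = c' -> cs_steps Sy a b c'.
Proof. intros H ->; auto. Qed.

Lemma cs_steps_one (Sy : system) a b c : cs_step Sy a b c -> cs_steps Sy a b c.
Proof. intros H. rewrite <- (Nat.add_0_r c). econstructor; eauto. constructor. Qed.

Definition active (Sy : system) (C : hterm Sy -> hterm Sy) : Prop :=
  forall a b c, cs_step Sy a b c -> cs_step Sy (C a) (C b) c.

Lemma active_steps (Sy : system) C a b c :
  active Sy C -> cs_steps Sy a b c -> cs_steps Sy (C a) (C b) c.
Proof. intros HC; induction 1; econstructor; eauto. Qed.

Lemma active_id (Sy : system) : active Sy (fun x => x).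
Proof. intros a b c H; auto. Qed.

Lemma active_comp (Sy : system) C D : active Sy C -> active Sy D -> active Sy (fun x => C (D x)).
Proof. intros H1 H2 a b c H; auto. Qed.

Lemma active_pos (Sy : system) g pre post :
  hmu Sy g (S (length pre)) -> active Sy (fun x => App g (pre ++ x :: post)).
Proof. intros H a b c Hs. apply cs_ctx; auto. Qed.

Definition cs_plus (Sy : system) s t c := exists u c1 c2,
  cs_step Sy s u c1 /\ cs_steps Sy u t c2 /\ c = c1 + c2.

Lemma cs_plus_steps (Sy : system) s t c : cs_plus Sy s t c -> cs_steps Sy s t c.
Proof. intros (u & c1 & c2 & H1 & H2 & ->). econstructor; eauto. Qed.

Lemma active_plus (Sy : system) C a b c :
  active Sy C -> cs_plus Sy a b c -> cs_plus Sy (C a) (C b) c.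
Proof. intros HC (u & c1 & c2 & H1 & H2 & ->). exists (C u), c1, c2; repeat split; auto.
  apply active_steps; auto. Qed.

Lemma cs_plus_steps_trans (Sy : system) a b c c1 c2 :
  cs_plus Sy a b c1 -> cs_steps Sy b c c2 -> cs_plus Sy a c (c1 + c2).
Proof. intros (u & d1 & d2 & H1 & H2 & ->) H3. exists u, d1, (d2 + c2); repeat split; auto.
  eapply cs_steps_trans; eauto. lia. Qed.

Lemma cs_step_plus_trans (Sy : system) a b c c1 c2 :
  cs_step Sy a b c1 -> cs_steps Sy b c c2 -> cs_plus Sy a c (c1 + c2).
Proof. intros. exists b, c1, c2; auto. Qed.

Lemma cs_root_eq (Sy : system) l r c (th : nat -> hterm Sy) X Y :
  xi_rule Sy l r c -> subst th l = X -> subst th r = Y -> cs_step Sy X Y c.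
Proof. intros H <- <-. constructor; auto. Qed.

Lemma in_firstn_l {A} k (l : list A) x : In x (firstn k l) -> In x l.
Proof. intros H; rewrite <- (firstn_skipn k l); apply in_or_app; auto. Qed.
Lemma in_skipn_l {A} k (l : list A) x : In x (skipn k l) -> In x l.
Proof. intros H; rewrite <- (firstn_skipn k l); apply in_or_app; auto. Qed.

Lemma firstn_seq' k a n : firstn k (seq a n) = seq a (min k n).
Proof. revert a n; induction k; intros a [|n]; simpl; auto. f_equal; auto. Qed.

Lemma repl_S {A} (L : list A) i M : repl L (S i) M = firstn i L ++ M ++ skipn (S i) L.
Proof. unfold repl. now rewrite Nat.sub_succ, Nat.sub_0_r. Qed.

Lemma map_repl {A B} (f : A -> B) L i M : map f (repl L i M) = repl (map f L) i (map f M).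
Proof. unfold repl. now rewrite !map_app, firstn_map, skipn_map. Qed.

Lemma length_repl {A} (L : list A) i M : i < length L ->
  length (repl L (S i) M) = length L - 1 + length M.
Proof. intros H. rewrite repl_S, !length_app, length_firstn, length_skipn. lia. Qed.

Lemma split_at_nth {A} (L : list A) i d : i < length L ->
  L = firstn i L ++ nth i L d :: skipn (S i) L.
Proof. revert i; induction L; intros [|i] H; simpl in *; try lia; auto.
  f_equal. apply IHL. lia. Qed.

Lemma repl_nth_same {A} (L : list A) i d : i < length L -> repl L (S i) [nth i L d] = L.
Proof. intros H. rewrite repl_S. simpl. symmetry; apply split_at_nth; auto. Qed.

Lemma length_clear_bit R i : length (clear_bit R i) = length R.
Proof. revert i; induction R; intros [|i]; simpl; auto. Qed.

Lemma repl_clear (Sy : system) R i : i < length R ->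
  repl (map (star Sy) R) (S i) [star Sy false] = map (star Sy) (clear_bit R i).
Proof.
  rewrite repl_S. revert i; induction R; intros [|i] H; simpl in *; try lia; auto.
  f_equal. apply IHR; lia.
Qed.

Lemma map_seq_nth {A B} (f : nat -> B) (g : A -> B) (L : list A) K d :
  (forall x, K <= x < K + length L -> f x = g (nth (x - K) L d)) ->
  map f (seq K (length L)) = map g L.
Proof.
  revert K; induction L; intros K H; simpl; auto.
  f_equal.
  - rewrite H by (simpl; lia). now rewrite Nat.sub_diag.
  - apply IHL. intros x Hx. rewrite H by (simpl; lia).
    replace (x - K) with (S (x - S K)) by lia. reflexivity.
Qed.

Lemma flat_map_vars_Var {S} (l : list nat) : flat_map (@vars S) (map Var l) = l.
Proof. induction l; simpl; f_equal; auto. Qed.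

Lemma NoDup_app_inv {A} (a b : list A) :
  NoDup (a ++ b) -> NoDup a /\ NoDup b /\ (forall x, In x a -> ~ In x b).
Proof.
  induction a; simpl; intros H.
  - repeat split; auto. constructor.
  - inversion H as [|? ? Hn Hd]; subst. destruct (IHa Hd) as (K1 & K2 & K4).
    repeat split; auto.
    + constructor; auto. intros Hi; apply Hn; apply in_or_app; auto.
    + intros x [<-|Hx] Hb; [apply Hn; apply in_or_app; auto | eapply K4; eauto].
Qed.

Definition maxl (l : list nat) : nat := fold_right max 0 l.
Lemma maxl_in l x : In x l -> x <= maxl l.
Proof. induction l; simpl; [intros []|]. intros [<-|H]; try lia. specialize (IHl H); lia. Qed.

Lemma NoDup_seq_split a n k :
  k < n -> NoDup (firstn k (seq a n) ++ skipn (S k) (seq a n)).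
Proof.
  intros H. rewrite firstn_seq', skipn_seq. apply NoDup_app; try apply seq_NoDup.
  intros x Hx1 Hx2. apply in_seq in Hx1; apply in_seq in Hx2. lia.
Qed.

Lemma in_seq_split a n k x :
  In x (firstn k (seq a n) ++ skipn (S k) (seq a n)) -> a <= x < a + n.
Proof.
  intros H; apply in_app_or in H; destruct H as [H|H];
  [apply in_firstn_l in H|apply in_skipn_l in H]; apply in_seq in H; lia.
Qed.

Lemma in_firstn_seq k a n x : In x (firstn k (seq a n)) -> a <= x < a + k.
Proof. rewrite firstn_seq'. intros H; apply in_seq in H; lia. Qed.
Lemma in_skipn_seq k a n x : In x (skipn k (seq a n)) -> a + k <= x < a + n.
Proof. rewrite skipn_seq. intros H; apply in_seq in H; lia. Qed.

Lemma map_subst_Var {S} (th : nat -> term S) l : map (subst th) (map Var l) = map th l.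
Proof. rewrite map_map; reflexivity. Qed.

Lemma flat_map_vars_star (Sy : system) (R : list bool) :
  flat_map vars (map (star Sy) R) = [].
Proof. induction R; simpl; auto. Qed.

Lemma subst_star (Sy : system) th b : subst th (star Sy b) = star Sy b.
Proof. reflexivity. Qed.

Lemma map_subst_star (Sy : system) th R : map (subst th) (map (star Sy) R) = map (star Sy) R.
Proof. rewrite map_map; reflexivity. Qed.

Lemma map_star_false (Sy : system) R : Forall (fun b => b = false) R ->
  map (fun b : bool => star Sy b) R = repeat (star Sy false) (length R).
Proof. induction 1; simpl; subst; f_equal; auto. Qed.

Definition APX (Sy : system) (b : fterm Sy) (t : hterm Sy) : Prop :=
  forall K, exists v (psi : nat -> hterm Sy), ap Sy b v /\
    (forall x, In x (vars v) -> K <= x) /\ NoDup (vars v) /\ subst psi v = t.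

Definition CL (Sy : system) (b : fterm Sy) : Prop :=
  forall u, lnf Sy u -> wf_g Sy u -> NoDup (vars u) -> disjoint (vars u) (vars b) ->
    APX Sy b (zeta Sy u) \/ unifiable (erase Sy u) b.

Lemma in_vars_list {S} (l : list (term S)) t x : In t l -> In x (vars t) -> In x (vars_list l).
Proof. intros. unfold vars_list. apply in_flat_map. eauto. Qed.

Lemma NoDup_vars_list_elem {S} (l : list (term S)) t :
  NoDup (vars_list l) -> In t l -> NoDup (vars t).
Proof.
  induction l; simpl; [intros _ []|]. unfold vars_list; simpl. intros H [<-|Hi].
  - apply NoDup_app_inv in H; tauto.
  - apply NoDup_app_inv in H; apply IHl; tauto.
Qed.

Lemma vars_list_map_erase (Sy : system) us : vars_list (map (erase Sy) us) = vars_list us.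
Proof. induction us; simpl; auto. unfold vars_list in *; simpl. rewrite vars_erase, IHus; auto. Qed.

Lemma clash_list (Sy : system) (bs : list (fterm Sy)) (us : list (gterm Sy)) :
  Forall (CL Sy) bs -> length bs = length us -> Forall (lnf Sy) us -> Forall (wf_g Sy) us ->
  NoDup (vars_list us) -> NoDup (vars_list bs) -> disjoint (vars_list us) (vars_list bs) ->
  (exists k, k < length bs /\ APX Sy (nth k bs (Var 0)) (zeta Sy (nth k us (Var 0)))) \/
  exists th, map (subst th) (map (erase Sy) us) = map (subst th) bs.
Proof.
  revert us; induction bs as [|b bs IH]; intros [|u us] HC Hl Hln Hw Hnu Hnb Hd; simpl in *; try lia.
  - right. exists (fun x => Var x). reflexivity.
  - inversion HC as [|? ? HCb HCbs]; subst. inversion Hln; subst. inversion Hw; subst.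
    unfold vars_list in Hnu, Hnb, Hd; simpl in Hnu, Hnb, Hd.
    apply NoDup_app_inv in Hnu as (Hnu1 & Hnu2 & Hnu3).
    apply NoDup_app_inv in Hnb as (Hnb1 & Hnb2 & Hnb3).
    destruct (HCb u) as [HA|[th1 Hth1]]; auto.
    { intros x Hx1 Hx2. apply (Hd x); apply in_or_app; auto. }
    + left. exists 0. split; [lia|auto].
    + destruct (IH us) as [[k [Hk HA]]|[th2 Hth2]]; auto.
      { intros x Hx1 Hx2. apply (Hd x); apply in_or_app; auto. }
      * left. exists (S k). split; [lia|auto].
      * right. exists (fun x => if in_dec Nat.eq_dec x (vars u ++ vars b) then th1 x else th2 x).
        simpl. f_equal.
        { rewrite (subst_ext _ th1), (subst_ext _ th1 b); auto.
          - intros x Hx. destruct in_dec as [_|n]; auto. exfalso; apply n; apply in_or_app; auto.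
          - intros x Hx. rewrite vars_erase in Hx.
            destruct in_dec as [_|n]; auto. exfalso; apply n; apply in_or_app; auto. }
        { rewrite (map_ext_in _ (subst th2)), (map_ext_in _ (subst th2) bs); auto.
          - intros t Ht. apply subst_ext. intros x Hx.
            destruct in_dec as [Hi|]; auto. exfalso.
            assert (Hx' : In x (vars_list bs)) by (eapply in_vars_list; eauto).
            apply in_app_or in Hi; destruct Hi as [Hi|Hi].
            + apply (Hd x); apply in_or_app; auto.
            + apply (Hnb3 x); auto.
          - intros t Ht. apply subst_ext. intros x Hx.
            destruct in_dec as [Hi|]; auto. exfalso.
            apply in_map_iff in Ht as (u' & <- & Hu'). rewrite vars_erase in Hx.
            assert (Hx' : In x (vars_list us)) by (eapply in_vars_list; eauto).
            apply in_app_or in Hi; destruct Hi as [Hi|Hi].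
            + apply (Hnu3 x); auto.
            + apply (Hd x); apply in_or_app; auto. }
Qed.

Lemma flat_map_vars_repeat_star (Sy : system) b n :
  flat_map vars (repeat (star Sy b) n) = [].
Proof. induction n; simpl; auto. Qed.

Lemma nth_map_zeta (Sy : system) us k : nth k (map (zeta Sy) us) (Var 0) = zeta Sy (nth k us (Var 0)).
Proof. revert k; induction us; intros [|k]; simpl; auto. Qed.

Lemma map_seq_zeta (Sy : system) (us : list (gterm Sy)) K (psi : nat -> hterm Sy) :
  map (fun x => if x <? K + length us then zeta Sy (nth (x - K) us (Var 0)) else psi x)
      (seq K (length us)) = map (zeta Sy) us.
Proof.
  apply map_seq_nth with (d := Var 0). intros x Hx. destruct (Nat.ltb_spec x (K + length us)); [auto|exfalso; apply (Nat.lt_irrefl x); eapply Nat.lt_le_trans; [exact (proj2 Hx)|exact H]].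
Qed.

Lemma clash (Sy : system) (b : fterm Sy) :
  cterm Sy b -> wf_f Sy b -> NoDup (vars b) -> CL Sy b.
Proof.
  induction b as [y|c ts IH] using term_ind2; intros Hc Hwb Hnb u Hlu Hwu Hnu Hd.
  - right. exists (fun z => if Nat.eqb z y then erase Sy u else Var z). simpl.
    rewrite Nat.eqb_refl. apply subst_id. intros x Hx. rewrite vars_erase in Hx.
    destruct (Nat.eqb_spec x y); auto. subst. exfalso; apply (Hd y); simpl; auto.
  - inversion Hc as [|? ? Hmc Hcts]; subst. apply wf_app_inv in Hwb as (_ & Hlts & Hwts).
    destruct u as [y|[c' R] us].
    + right. exists (fun z => if Nat.eqb z y then App c ts else Var z).
      change (subst (fun z => if Nat.eqb z y then App c ts else Var z) (Var y) = subst (fun z => if Nat.eqb z y then App c ts else Var z) (App c ts)).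
      rewrite (subst_id _ (App c ts)). simpl. rewrite Nat.eqb_refl; auto. intros x Hx.
      destruct (Nat.eqb_spec x y); auto. subst. exfalso; apply (Hd y); simpl; auto.
    + inversion Hlu as [|? ? ? HR Hlus]; subst.
      apply wf_app_inv in Hwu as (HlR & Hlus' & Hwus). simpl in HlR, Hlus'.
      destruct (classic (c' = c)) as [->|Hne].
      * assert (HCts : Forall (CL Sy) ts).
        { rewrite Forall_forall in *. intros t Ht.
          apply IH; [auto|apply Hcts;auto|apply Hwts; auto|eapply NoDup_vars_list_elem; eauto]. }
        destruct (clash_list Sy ts us) as [[k [Hk HA]]|[th Hth]]; auto; try lia. all: try (exact Hwus). all: try (exact Hnu). all: try (exact Hnb). all: try (etransitivity; [exact Hlts|symmetry; exact Hlus']).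
        { left. intros K. set (n := length ts).
          destruct (HA (K + n)) as (v & psi & Hap & Hv1 & Hv2 & Hv3).
          assert (Hkn : k < n) by (unfold n; exact Hk).
          exists (App (HF c) (firstn k (map Var (seq K n)) ++ v :: skipn (S k) (map Var (seq K n)))).
          exists (fun x => if x <? K + length us then zeta Sy (nth (x - K) us (Var 0)) else psi x).
          assert (Hvars : vars (App (HF c) (firstn k (map Var (seq K n)) ++ v :: skipn (S k) (map Var (seq K n))))
                  = firstn k (seq K n) ++ vars v ++ skipn (S k) (seq K n)).
          { rewrite vars_App, flat_map_app. cbn [flat_map]. rewrite firstn_map, skipn_map, !flat_map_vars_Var. reflexivity. }
          rewrite Hvars. split; [|split; [|split]].
          - apply ap_arg; auto. apply length_seq.
          - intros x Hx. apply in_app_or in Hx as [Hx|Hx]; [apply in_firstn_seq in Hx; lia|].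
            apply in_app_or in Hx as [Hx|Hx]; [apply Hv1 in Hx; lia|apply in_skipn_seq in Hx; lia].
          - apply NoDup_app; [rewrite firstn_seq'; apply seq_NoDup| |].
            + apply NoDup_app; auto. rewrite skipn_seq; apply seq_NoDup.
              intros x Hx1 Hx2. apply Hv1 in Hx1. apply in_skipn_seq in Hx2. lia.
            + intros x Hx1 Hx2. apply in_firstn_seq in Hx1.
              apply in_app_or in Hx2 as [Hx|Hx]; [apply Hv1 in Hx; lia|apply in_skipn_seq in Hx; lia].
          - assert (HR0 : R = []) by (destruct R; [reflexivity| simpl in HlR; rewrite Hmc in HlR; discriminate]).
            subst R.
            assert (Hn : n = length us) by (unfold n; etransitivity; [exact Hlts| symmetry; exact Hlus']).
            assert (HL : map (subst (fun x => if x <? K + length us then zeta Sy (nth (x - K) us (Var 0)) else psi x))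
                           (map Var (seq K n)) = map (zeta Sy) us).
            { rewrite map_map, Hn. exact (map_seq_zeta Sy us K psi). }
            cbn [subst zeta fst snd map]. rewrite app_nil_r. f_equal.
            rewrite map_app. cbn [map]. unfold gterm, hterm, fterm, gsym in *. rewrite <- firstn_map, <- skipn_map, HL.
            rewrite (subst_ext _ psi).
            + rewrite Hv3, <- nth_map_zeta. symmetry. apply split_at_nth. rewrite length_map.
              rewrite <- Hn; exact Hkn.
            + intros x Hx. apply Hv1 in Hx. destruct (Nat.ltb_spec x (K + length us)); auto.
              exfalso. rewrite <- Hn in *. lia. }
        { right. exists th. simpl. rewrite Hth. reflexivity. }
      * left. intros K.
        destruct (Nat.eq_dec (m Sy c') 0) as [H0|H0].
        -- exists (App (HF c') (map Var (seq K (length us)))).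
           exists (fun x => if x <? K + length us then zeta Sy (nth (x - K) us (Var 0)) else Var x).
           rewrite vars_App, flat_map_vars_Var. split; [|split; [|split]].
           ++ apply ap_con; auto. rewrite length_seq; auto.
           ++ intros x Hx; apply in_seq in Hx; lia.
           ++ apply seq_NoDup.
           ++ destruct R; [|simpl in HlR; rewrite H0 in HlR; discriminate].
              cbn [subst zeta map fst snd]. rewrite app_nil_r. f_equal. rewrite map_map.
              apply map_seq_zeta.
        -- exists (App (HF c') (map Var (seq K (length us)) ++ repeat (star Sy false) (m Sy c'))).
           exists (fun x => if x <? K + length us then zeta Sy (nth (x - K) us (Var 0)) else Var x).
           rewrite vars_App, flat_map_app, flat_map_vars_Var, flat_map_vars_repeat_star, app_nil_r.
           split; [|split; [|split]].
           ++ apply ap_def; auto; try lia. rewrite length_seq; auto.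
           ++ intros x Hx; apply in_seq in Hx; lia.
           ++ apply seq_NoDup.
           ++ cbn [subst zeta fst snd]. f_equal. rewrite map_app, map_map. f_equal.
              ** apply map_seq_zeta.
              ** rewrite map_star_false by auto. rewrite HlR.
                 clear. induction (m Sy c'); simpl; f_equal; auto.
Qed.

Fixpoint good {F} (V : list nat) (cs : list (term F * term F)) : Prop :=
  match cs with
  | [] => True
  | (a, b) :: r => incl (vars a) V /\ good (V ++ vars b) r
  end.

Lemma good_of {F} (cs : list (term F * term F)) : forall V,
  (forall i a b, nth_error cs i = Some (a, b) -> incl (vars a) (V ++ vars_list (firstn i (map snd cs)))) ->
  good V cs.
Proof.
  induction cs as [|[a b] cs IH]; intros V H; simpl; auto. split.
  - specialize (H 0 a b eq_refl). simpl in H. rewrite app_nil_r in H; auto.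
  - apply IH. intros i a' b' Hi. specialize (H (S i) a' b' Hi). simpl in H.
    unfold vars_list in *. simpl in H. rewrite app_assoc in H. auto.
Qed.

Lemma good_firstn {F} (cs : list (term F * term F)) j V : good V cs -> good V (firstn j cs).
Proof.
  revert j V; induction cs as [|[a b] cs IH]; intros [|j] V H; simpl in *; auto.
  destruct H; split; auto.
Qed.

Fixpoint condsim (Sy : system) (sigma : nat -> gterm Sy) (cs : list (fterm Sy * fterm Sy)) (costs : list nat) : Prop :=
  match cs, costs with
  | [], [] => True
  | (a, b) :: r, c :: cr =>
      cs_steps Sy (zeta Sy (subst sigma (label Sy a))) (zeta Sy (subst sigma (label Sy b))) c /\
      condsim Sy sigma r cr
  | _, _ => False
  end.

Lemma condsim_app (Sy : system) sigma cs1 cs2 costs :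
  condsim Sy sigma (cs1 ++ cs2) costs ->
  exists c1 c2, costs = c1 ++ c2 /\ condsim Sy sigma cs1 c1 /\ condsim Sy sigma cs2 c2.
Proof.
  revert costs; induction cs1 as [|[a b] cs1 IH]; intros costs H; simpl in *.
  - exists [], costs; simpl; auto.
  - destruct costs as [|c costs]; [contradiction|]. destruct H as [H1 H2].
    destruct (IH _ H2) as (c1 & c2 & -> & H3 & H4). exists (c :: c1), c2; simpl; auto.
Qed.

Lemma condsim_nil (Sy : system) sigma costs : condsim Sy sigma [] costs -> costs = [].
Proof. destruct costs; simpl; tauto. Qed.

Lemma firstn_S_nth {A} (l : list A) q x : nth_error l q = Some x -> firstn (S q) l = firstn q l ++ [x].
Proof. revert q; induction l; intros [|q] H; simpl in *; try discriminate.
  - inversion H; auto.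
  - f_equal. auto. Qed.

Lemma rule_of (Sy : system) f i rho : strong_cctrs Sy -> nth_error (rules Sy f) i = Some rho ->
  cctrs_rule Sy f rho.
Proof.
  intros HR Hi. destruct (HR f) as [_ H]. rewrite Forall_forall in H. apply H.
  eapply nth_error_In; eauto.
Qed.

Lemma pairwise_concat (ls : list (list nat)) :
  pairwise_disjoint ls -> Forall (@NoDup nat) ls -> NoDup (concat ls).
Proof.
  induction ls as [|l ls IH]; simpl; intros Hp Hn. constructor.
  inversion Hn; subst. apply NoDup_app; auto.
  - apply IH; auto. intros i j Hi Hj Hij. apply (Hp (S i) (S j)); simpl; lia.
  - intros x Hx Hx2. apply in_concat in Hx2 as (l' & Hl' & Hx').
    apply In_nth with (d := []) in Hl' as (j & Hj & <-).
    apply (Hp 0 (S j)) in Hx; simpl; auto; lia.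
Qed.

Lemma rule_nodup (Sy : system) f rho : cctrs_rule Sy f rho ->
  NoDup (vars_list (r_args rho) ++ vars_list (map snd (r_conds rho))).
Proof.
  intros (_ & _ & _ & _ & _ & _ & Hlin & Hlb & Hpd & _).
  pose proof (pairwise_concat _ Hpd) as H. simpl in H.
  assert (E : concat (map vars (map snd (r_conds rho))) = vars_list (map snd (r_conds rho))).
  { unfold vars_list. rewrite flat_map_concat_map. reflexivity. }
  rewrite E in H. apply H. constructor; auto. apply Forall_map. auto.
Qed.

Lemma vars_list_firstn {S} (l : list (term S)) j : exists rest, vars_list l = vars_list (firstn j l) ++ rest.
Proof. exists (vars_list (skipn j l)). unfold vars_list. rewrite <- flat_map_app, firstn_skipn. auto. Qed.

Lemma vars_label (Sy : system) t : vars (label Sy t) = vars t.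
Proof.
  induction t as [x|g args IH] using term_ind2; auto.
  cbn [label]. rewrite !vars_App. induction IH; simpl; auto. rewrite H. f_equal; auto.
Qed.

Lemma vars_list_map_xi (Sy : system) b L : vars_list (map (xi Sy b) L) = vars_list L.
Proof. induction L; simpl; auto. unfold vars_list in *; simpl. rewrite vars_xi. f_equal; auto. Qed.

Lemma vars_pat (Sy : system) (g : hsym (fs Sy)) L (xs : list nat) i Ms :
  vars (App g (map (xi Sy true) L ++ repl (map Var xs) (S i) Ms)) =
  vars_list L ++ firstn i xs ++ flat_map vars Ms ++ skipn (S i) xs.
Proof.
  rewrite vars_App, flat_map_app, repl_S, !flat_map_app, firstn_map, skipn_map, !flat_map_vars_Var.
  f_equal. apply vars_list_map_xi.
Qed.

Lemma lin_pat (P1 P2 Q : list nat) N M i :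
  NoDup (P1 ++ P2) -> (forall x, In x (P1 ++ P2) -> x < N) -> NoDup Q ->
  (forall x, In x Q -> N + M <= x) -> i < M ->
  NoDup (P1 ++ firstn i (seq N M) ++ (P2 ++ Q) ++ skipn (S i) (seq N M)).
Proof.
  intros H1 H2 H3 H4 Hi.
  apply NoDup_app_inv in H1 as (HP1 & HP2 & HP12).
  assert (A1 : forall x, In x P1 -> x < N) by (intros; apply H2; apply in_or_app; auto).
  assert (A2 : forall x, In x P2 -> x < N) by (intros; apply H2; apply in_or_app; auto).
  apply NoDup_app; auto.
  - apply NoDup_app; [rewrite firstn_seq'; apply seq_NoDup| |].
    + apply NoDup_app; [apply NoDup_app| rewrite skipn_seq; apply seq_NoDup|].
      * auto.
      * auto.
      * intros x Hx1 Hx2. apply A2 in Hx1. apply H4 in Hx2. lia.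
      * intros x Hx1 Hx2. apply in_skipn_seq in Hx2.
        apply in_app_or in Hx1 as [Hx|Hx]; [apply A2 in Hx|apply H4 in Hx]; lia.
    + intros x Hx1 Hx2. apply in_firstn_seq in Hx1.
      apply in_app_or in Hx2 as [Hx|Hx]; [apply in_app_or in Hx as [Hx|Hx]|].
      * apply A2 in Hx; lia.
      * apply H4 in Hx; lia.
      * apply in_skipn_seq in Hx; lia.
  - intros x Hx1 Hx2. pose proof (A1 _ Hx1).
    apply in_app_or in Hx2 as [Hx|Hx]; [apply in_firstn_seq in Hx; lia|].
    apply in_app_or in Hx as [Hx|Hx]; [apply in_app_or in Hx as [Hx|Hx]|].
    + apply (HP12 x); auto.
    + apply H4 in Hx; lia.
    + apply in_skipn_seq in Hx; lia.
Qed.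

Lemma repl_star_same (Sy : system) R i b : i < length R -> nth i R false = b ->
  repl (map (star Sy) R) (S i) [star Sy b] = map (star Sy) R.
Proof.
  intros H1 H2. rewrite <- H2. change (star Sy (nth i R false)) with ((fun b => star Sy b) (nth i R false)).
  rewrite <- map_nth. apply repl_nth_same. rewrite length_map; auto.
Qed.

Section Chain.
Variable Sy : system.
Variable f : fs Sy.
Variable i : nat.
Variable rho : rule (fs Sy).
Variable R : list bool.
Variable sigma : nat -> gterm Sy.
Hypothesis Hrule : nth_error (rules Sy f) i = Some rho.
Hypothesis HCR : cctrs_rule Sy f rho.
Hypothesis HlR : length R = m Sy f.
Hypothesis HRi : nth i R false = true.

Definition allv := vars_list (r_args rho) ++ vars (r_rhs rho) ++
  flat_map (fun ab : fterm Sy * fterm Sy => vars (fst ab) ++ vars (snd ab)) (r_conds rho).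
Definition NN := S (maxl allv).
Definition xs := seq NN (m Sy f).
Definition th (psi : nat -> hterm Sy) (x : nat) : hterm Sy :=
  if x <? NN then zeta Sy (sigma x)
  else if x <? NN + m Sy f then star Sy (nth (x - NN) R false) else psi x.
Definition ZT (t : fterm Sy) : hterm Sy := zeta Sy (subst sigma (label Sy t)).
Definition AA := map ZT (r_args rho).
Definition Fterm j (L : list (hterm Sy)) : hterm Sy :=
  App (HFij f (S i) j) (AA ++ repl (map (star Sy) R) (S i) L).
Definition BS := map snd (r_conds rho).

Lemma Hi_lt : i < m Sy f.
Proof. unfold m. apply nth_error_Some. rewrite Hrule. discriminate. Qed.

Lemma allv_bound x : In x allv -> x < NN.
Proof. intros H. unfold NN. apply maxl_in in H. lia. Qed.

Lemma bound_args l x : In l (r_args rho) -> In x (vars l) -> x < NN.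
Proof. intros. apply allv_bound. unfold allv. apply in_or_app. left. eapply in_vars_list; eauto. Qed.

Lemma bound_rhs x : In x (vars (r_rhs rho)) -> x < NN.
Proof. intros. apply allv_bound. unfold allv. apply in_or_app. right. apply in_or_app; auto. Qed.

Lemma bound_a a b x : In (a, b) (r_conds rho) -> In x (vars a) -> x < NN.
Proof. intros. apply allv_bound. unfold allv. apply in_or_app. right. apply in_or_app; right.
  apply in_flat_map. exists (a, b). split; auto. apply in_or_app; auto. Qed.

Lemma bound_b a b x : In (a, b) (r_conds rho) -> In x (vars b) -> x < NN.
Proof. intros. apply allv_bound. unfold allv. apply in_or_app. right. apply in_or_app; right.
  apply in_flat_map. exists (a, b). split; auto. apply in_or_app; auto. Qed.

Lemma bound_bs b x : In b BS -> In x (vars b) -> x < NN.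
Proof. unfold BS. intros Hb Hx. apply in_map_iff in Hb as ([a b'] & <- & Hb). eapply bound_b; eauto. Qed.

Lemma E1 psi t : (forall x, In x (vars t) -> x < NN) -> subst (th psi) (xi Sy true t) = ZT t.
Proof.
  intros H. unfold ZT. rewrite zeta_subst, zeta_label. apply subst_ext. intros x Hx.
  rewrite vars_xi in Hx. unfold th. destruct (Nat.ltb_spec x NN); auto. apply H in Hx. lia.
Qed.

Lemma E2 psi : map (subst (th psi)) (map Var xs) = map (star Sy) R.
Proof.
  rewrite map_map. unfold xs. rewrite <- HlR. apply map_seq_nth with (d := false).
  intros x Hx. simpl. unfold th. destruct (Nat.ltb_spec x NN); try lia.
  destruct (Nat.ltb_spec x (NN + m Sy f)); auto. lia.
Qed.

Lemma E3 psi : map (subst (th psi)) (map (xi Sy true) (r_args rho)) = AA.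
Proof.
  rewrite map_map. unfold AA. apply map_ext_in. intros l Hl. apply E1. intros; eapply bound_args; eauto.
Qed.

Lemma E4 psi L : (forall b, In b L -> In b BS) ->
  map (subst (th psi)) (map (xi Sy true) L) = map ZT L.
Proof.
  intros H. rewrite map_map. apply map_ext_in. intros b Hb. apply E1. intros; eapply bound_bs; eauto.
Qed.

Lemma zeta_lhs : zeta Sy (lhs_inst Sy f R rho sigma) = App (HF f) (AA ++ map (star Sy) R).
Proof. unfold lhs_inst. cbn [zeta fst snd]. rewrite map_map. reflexivity. Qed.

Lemma len_args : length (r_args rho) = ar Sy f.
Proof. destruct HCR; auto. Qed.

Lemma len_AA : length AA = ar Sy f.
Proof. unfold AA. rewrite length_map. apply len_args. Qed.

Lemma nodup_rule j : NoDup (vars_list (r_args rho) ++ vars_list (firstn j BS)).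
Proof.
  pose proof (rule_nodup Sy f rho HCR) as H. fold BS in H.
  destruct (vars_list_firstn BS j) as [rest E]. rewrite E, app_assoc in H.
  apply NoDup_app_remove_r in H; auto.
Qed.

Lemma bound_pre j x : In x (vars_list (r_args rho) ++ vars_list (firstn j BS)) -> x < NN.
Proof.
  intros H. apply in_app_or in H as [H|H]; unfold vars_list in H; apply in_flat_map in H as (t & Ht & Hx).
  - eapply bound_args; eauto.
  - eapply bound_bs; eauto. eapply in_firstn_l; eauto.
Qed.

Lemma sub1 : S i - 1 = i.
Proof. lia. Qed.

Lemma step2 a0 b0 rest : r_conds rho = (a0, b0) :: rest ->
  cs_step Sy (App (HF f) (AA ++ map (star Sy) R)) (Fterm 1 [ZT a0]) 0.
Proof.
  intros Hc. pose proof Hi_lt.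
  eapply cs_root_eq with (th := th (fun x => Var x)).
  - split; cycle 1.
    + eapply (xi_2 Sy f (S i) rho xs a0 b0 rest); auto; try lia.
      * rewrite sub1; auto.
      * unfold xs; rewrite length_seq; auto.
    + unfold linear. rewrite vars_pat. unfold xs.
      pose proof (lin_pat (vars_list (r_args rho)) [] [] NN (m Sy f) i) as L.
      simpl in L. rewrite app_nil_r in L. apply L; auto.
      * pose proof (nodup_rule 0). simpl in H0. rewrite app_nil_r in H0; auto.
      * intros x Hx. apply (bound_pre 0). apply in_or_app; auto.
      * constructor.
      * intros _ [].
  - cbn [subst]. f_equal. rewrite map_app, E3, map_repl, E2. f_equal.
    apply repl_star_same; auto. lia.
  - cbn [subst]. unfold Fterm. f_equal. rewrite map_app, E3, map_repl, E2. f_equal. f_equal.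
    cbn [map]. f_equal. apply E1. intros x Hx. eapply bound_a; eauto. rewrite Hc; left; auto.
Qed.

Lemma fm_xi b L : flat_map vars (map (xi Sy b) L) = vars_list L.
Proof. apply vars_list_map_xi. Qed.

Lemma subS1 j : S j - 1 = j.
Proof. lia. Qed.

Lemma step4 j a b : 1 <= j < length (r_conds rho) -> nth_error (r_conds rho) j = Some (a, b) ->
  cs_step Sy (Fterm j (map ZT (firstn j BS))) (Fterm (S j) (map ZT (firstn j BS) ++ [ZT a])) 0.
Proof.
  intros Hj Hn. pose proof Hi_lt.
  assert (Hfb : forall b', In b' (firstn j BS) -> In b' BS) by (intros; eapply in_firstn_l; eauto).
  eapply cs_root_eq with (th := th (fun x => Var x)).
  - split; cycle 1.
    + eapply (xi_4 Sy f (S i) rho xs j a b); eauto; try lia.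
      * rewrite sub1; auto.
      * unfold xs; rewrite length_seq; auto.
    + unfold linear. rewrite vars_pat, fm_xi. unfold xs.
      pose proof (lin_pat (vars_list (r_args rho)) (vars_list (firstn j BS)) [] NN (m Sy f) i) as L.
      rewrite app_nil_r in L. apply L; auto.
      * apply nodup_rule.
      * apply bound_pre.
      * constructor.
      * intros _ [].
  - cbn [subst]. unfold Fterm. f_equal. rewrite map_app, E3, map_repl, E2. f_equal. f_equal.
    apply E4; auto.
  - cbn [subst]. unfold Fterm. f_equal. rewrite map_app, E3, map_repl, E2. f_equal. f_equal.
    rewrite map_app, E4; auto. f_equal. cbn [map]. f_equal. apply E1. intros x Hx.
    eapply bound_a; eauto. eapply nth_error_In; eauto.
Qed.

Lemma step3 : r_conds rho <> [] ->
  cs_step Sy (Fterm (length (r_conds rho)) (map ZT BS)) (ZT (r_rhs rho)) 1.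
Proof.
  intros Hne. pose proof Hi_lt.
  eapply cs_root_eq with (th := th (fun x => Var x)).
  - split; cycle 1.
    + eapply (xi_3 Sy f (S i) rho xs); eauto; try lia.
      * rewrite sub1; auto.
      * unfold xs; rewrite length_seq; auto.
    + unfold linear. rewrite vars_pat, fm_xi. unfold xs.
      pose proof (lin_pat (vars_list (r_args rho)) (vars_list BS) [] NN (m Sy f) i) as L.
      rewrite app_nil_r in L. fold BS. apply L; auto.
      * pose proof (nodup_rule (length BS)) as Hn. rewrite firstn_all in Hn; auto.
      * intros x Hx. apply (bound_pre (length BS)). rewrite firstn_all; auto.
      * constructor.
      * intros _ [].
  - cbn [subst]. unfold Fterm. f_equal. rewrite map_app, E3, map_repl, E2. f_equal. f_equal.
    apply E4; auto.
  - apply E1. apply bound_rhs.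
Qed.

Lemma step1 : r_conds rho = [] ->
  cs_step Sy (App (HF f) (AA ++ map (star Sy) R)) (ZT (r_rhs rho)) 1.
Proof.
  intros Hc. pose proof Hi_lt.
  eapply cs_root_eq with (th := th (fun x => Var x)).
  - split; cycle 1.
    + eapply (xi_1 Sy f (S i) rho xs); auto; try lia.
      * rewrite sub1; auto.
      * unfold xs; rewrite length_seq; auto.
    + unfold linear. rewrite vars_pat. unfold xs.
      pose proof (lin_pat (vars_list (r_args rho)) [] [] NN (m Sy f) i) as L.
      simpl in L. rewrite app_nil_r in L. apply L; auto.
      * pose proof (nodup_rule 0). simpl in H0. rewrite app_nil_r in H0; auto.
      * intros x Hx. apply (bound_pre 0). apply in_or_app; auto.
      * constructor.
      * intros _ [].
  - cbn [subst]. f_equal. rewrite map_app, E3, map_repl, E2. f_equal.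
    apply repl_star_same; auto. lia.
  - apply E1. apply bound_rhs.
Qed.

Lemma step5 j a b v psi : nth_error (r_conds rho) j = Some (a, b) -> ap Sy b v ->
  (forall x, In x (vars v) -> NN + m Sy f <= x) -> NoDup (vars v) ->
  cs_step Sy (Fterm (S j) (map ZT (firstn j BS) ++ [subst psi v]))
    (App (HF f) (AA ++ map (star Sy) (clear_bit R i))) 0.
Proof.
  intros Hn Hap Hv1 Hv2. pose proof Hi_lt.
  assert (Hj : j < length (r_conds rho)) by (apply nth_error_Some; rewrite Hn; discriminate).
  assert (Hfb : forall b', In b' (firstn j BS) -> In b' BS) by (intros; eapply in_firstn_l; eauto).
  eapply cs_root_eq with (th := th psi).
  - split; cycle 1.
    + eapply (xi_5 Sy f (S i) rho xs (S j) a b v); eauto; try lia.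
      * rewrite sub1; auto.
      * unfold xs; rewrite length_seq; auto.
      * rewrite subS1; auto.
    + unfold linear. rewrite vars_pat, subS1, flat_map_app, fm_xi. unfold xs.
      pose proof (lin_pat (vars_list (r_args rho)) (vars_list (firstn j BS)) (vars v) NN (m Sy f) i) as L.
      cbn [flat_map]. rewrite app_nil_r. apply L; auto.
      * apply nodup_rule.
      * apply bound_pre.
  - cbn [subst]. unfold Fterm. f_equal. rewrite map_app, E3, map_repl, E2. f_equal. f_equal.
    rewrite subS1, map_app, E4; auto. f_equal. cbn [map]. f_equal. apply subst_ext.
    intros x Hx. apply Hv1 in Hx. unfold th. destruct (Nat.ltb_spec x NN); try lia.
    destruct (Nat.ltb_spec x (NN + m Sy f)); auto; lia.
  - cbn [subst]. f_equal. rewrite map_app, E3, map_repl, E2. f_equal.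
    apply repl_clear. lia.
Qed.

Lemma app_shape (T : Type) (X Y Z W : list T) x : X ++ Y ++ (Z ++ [x]) ++ W = (X ++ Y ++ Z) ++ x :: W.
Proof. rewrite <- !app_assoc. reflexivity. Qed.

Lemma activeD j L : length L = j -> active Sy (fun x => Fterm (S j) (L ++ [x])).
Proof.
  intros HL a b c H. unfold Fterm. rewrite !repl_S, !app_shape.
  apply cs_ctx; auto. simpl. rewrite !length_app, len_AA, length_firstn, length_map. pose proof Hi_lt. lia.
Qed.


Lemma chain a0 b0 rest : r_conds rho = (a0, b0) :: rest ->
  forall q a b costs, nth_error (r_conds rho) q = Some (a, b) ->
  condsim Sy sigma (firstn q (r_conds rho)) costs ->
  cs_steps Sy (Fterm 1 [ZT a0]) (Fterm (S q) (map ZT (firstn q BS) ++ [ZT a])) (list_sum costs).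
Proof.
  intros Hc. induction q as [|q IH]; intros a b costs Hn Hcs.
  - rewrite Hc in Hn. simpl in Hn. inversion Hn; subst. apply condsim_nil in Hcs. subst.
    exact (css_refl Sy _).
  - assert (HSq : S q < length (r_conds rho)) by (apply nth_error_Some; rewrite Hn; discriminate).
    destruct (nth_error (r_conds rho) q) as [[a' b']|] eqn:Hq.
    2: { apply nth_error_None in Hq. lia. }
    rewrite (firstn_S_nth _ _ _ Hq) in Hcs. apply condsim_app in Hcs as (c1 & c2 & -> & Hc1 & Hc2).
    destruct c2 as [|c [|]]; simpl in Hc2; try tauto. destruct Hc2 as [Hab _].
    specialize (IH a' b' c1 eq_refl Hc1).
    assert (HBq : nth_error BS q = Some b') by (unfold BS; erewrite map_nth_error; eauto; reflexivity).
    assert (HL : length (map ZT (firstn q BS)) = q).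
    { rewrite length_map, length_firstn. unfold BS. rewrite length_map. lia. }
    eapply cs_steps_eq.
    + eapply cs_steps_trans; [exact IH|].
      eapply cs_steps_trans; [exact (active_steps Sy _ _ _ _ (activeD q _ HL) Hab)|].
      apply cs_steps_one. change (zeta Sy (subst sigma (label Sy b'))) with (ZT b').
      replace (map ZT (firstn q BS) ++ [ZT b']) with (map ZT (firstn (S q) BS))
        by (rewrite (firstn_S_nth _ _ _ HBq), map_app; reflexivity).
      eapply step4; eauto. lia.
    + rewrite list_sum_app. simpl. lia.
Qed.

Lemma zeta_lhs_gen R' : zeta Sy (lhs_inst Sy f R' rho sigma) = App (HF f) (AA ++ map (star Sy) R').
Proof. unfold lhs_inst. cbn [zeta fst snd]. rewrite map_map. reflexivity. Qed.

Lemma firstn_len_app {A} (l l' : list A) : firstn (length l) (l ++ l') = l.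
Proof. induction l; simpl; [reflexivity| f_equal; exact IHl]. Qed.

Lemma L_succ costs : condsim Sy sigma (r_conds rho) costs ->
  cs_plus Sy (zeta Sy (lhs_inst Sy f R rho sigma)) (zeta Sy (subst sigma (label Sy (r_rhs rho))))
    (S (list_sum costs)).
Proof.
  intros Hcs. rewrite zeta_lhs. change (zeta Sy (subst sigma (label Sy (r_rhs rho)))) with (ZT (r_rhs rho)).
  destruct (r_conds rho) as [|[a0 b0] rest] eqn:Hc.
  - apply condsim_nil in Hcs; subst. eapply (cs_step_plus_trans _ _ _ _ 1 0); [apply step1; auto| constructor].
  - destruct (exists_last (l := (a0, b0) :: rest) ltac:(discriminate)) as (cs' & [a b] & E).
    rewrite E in Hcs. apply condsim_app in Hcs as (c1 & c2 & -> & Hc1 & Hc2).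
    destruct c2 as [|c [|]]; simpl in Hc2; try tauto. destruct Hc2 as [Hab _].
    assert (Hn : nth_error (r_conds rho) (length cs') = Some (a, b)).
    { rewrite Hc, E, nth_error_app2, Nat.sub_diag; auto. }
    assert (Hf : firstn (length cs') (r_conds rho) = cs') by (rewrite Hc, E; apply firstn_len_app).
    pose proof (chain a0 b0 rest Hc (length cs') a b c1 Hn ltac:(rewrite Hf; exact Hc1)) as HC.
    assert (HL : length (map ZT (firstn (length cs') BS)) = length cs').
    { rewrite length_map, length_firstn. unfold BS. rewrite length_map, Hc, E, length_app. simpl. lia. }
    assert (EB : map ZT (firstn (length cs') BS) ++ [ZT b] = map ZT BS).
    { unfold BS. rewrite Hc, E, map_app, firstn_app, length_map, Nat.sub_diag.
      rewrite (firstn_all2 (map snd cs')) by (rewrite length_map; lia).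
      cbn [firstn]. rewrite app_nil_r, map_app. reflexivity. }
    assert (EL : S (length cs') = length (r_conds rho)) by (rewrite Hc, E, length_app; simpl; lia).
    replace (S (list_sum (c1 ++ [c]))) with (0 + (list_sum c1 + (c + (1 + 0)))) by (rewrite list_sum_app; simpl; lia).
    eapply (cs_step_plus_trans _ _ _ _ 0 (list_sum c1 + (c + (1 + 0)))).
    + apply (step2 a0 b0 rest); auto.
    + eapply cs_steps_trans; [exact HC|].
      eapply cs_steps_trans; [exact (active_steps Sy _ _ _ _ (activeD _ _ HL) Hab)|].
      change (zeta Sy (subst sigma (label Sy b))) with (ZT b). rewrite EB, EL. apply cs_steps_one.
      apply step3. rewrite Hc; discriminate.
  Unshelve. all: try exact 0.
Qed.


Lemma conds_nonempty j ab : nth_error (r_conds rho) j = Some ab ->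
  exists a0 b0 rest, r_conds rho = (a0, b0) :: rest.
Proof. destruct (r_conds rho) as [|[a0 b0] rest]; intros H. destruct j; discriminate. eauto. Qed.

Lemma len_pref j ab : nth_error (r_conds rho) j = Some ab -> length (map ZT (firstn j BS)) = j.
Proof.
  intros Hn. assert (j < length (r_conds rho)) by (apply nth_error_Some; rewrite Hn; discriminate).
  rewrite length_map, length_firstn. unfold BS. rewrite length_map. lia.
Qed.

Lemma L_fail j a b u tau c costs :
  nth_error (r_conds rho) j = Some (a, b) ->
  condsim Sy sigma (firstn j (r_conds rho)) costs ->
  lnf Sy u -> wf_g Sy u -> linear u -> disjoint (vars u) (vars b) ->
  ~ unifiable (erase Sy u) b ->
  cs_steps Sy (zeta Sy (subst sigma (label Sy a))) (zeta Sy (subst tau u)) c ->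
  cs_plus Sy (zeta Sy (lhs_inst Sy f R rho sigma)) (zeta Sy (lhs_inst Sy f (clear_bit R i) rho sigma))
    (list_sum costs + c).
Proof.
  intros Hn Hcs Hlu Hwu Hlin Hd Hnu Hsteps.
  rewrite zeta_lhs, zeta_lhs_gen.
  destruct (conds_nonempty j _ Hn) as (a0 & b0 & rest & Hc).
  assert (Hin : In b (map snd (r_conds rho))).
  { apply in_map_iff. exists (a, b). split; auto. eapply nth_error_In; eauto. }
  destruct HCR as (_ & _ & _ & Hwc & _ & Hcb & _ & Hlb & _).
  rewrite Forall_forall in Hcb, Hlb, Hwc.
  assert (Hwb : wf_f Sy b).
  { apply in_map_iff in Hin as ([a' b'] & <- & Hin'). apply (Hwc _ Hin'). }
  destruct (clash Sy b (Hcb _ Hin) Hwb (Hlb _ Hin) u Hlu Hwu Hlin Hd) as [HA|HU]; [|contradiction].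
  destruct (HA (NN + m Sy f)) as (v & psi0 & Hap & Hv1 & Hv2 & Hv3).
  assert (Et : zeta Sy (subst tau u) = subst (fun x => subst (fun y => zeta Sy (tau y)) (psi0 x)) v).
  { rewrite zeta_subst, <- Hv3, subst_subst. reflexivity. }
  rewrite Et in Hsteps.
  replace (list_sum costs + c) with (0 + (list_sum costs + (c + 0))) by lia.
  eapply cs_step_plus_trans; [apply (step2 a0 b0 rest Hc)|].
  eapply cs_steps_trans; [exact (chain a0 b0 rest Hc j a b costs Hn Hcs)|].
  eapply cs_steps_trans; [exact (active_steps Sy _ _ _ _ (activeD _ _ (len_pref j _ Hn)) Hsteps)|].
  apply cs_steps_one. eapply step5; eauto.
Qed.

Lemma L_sub j a b costs :
  nth_error (r_conds rho) j = Some (a, b) ->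
  condsim Sy sigma (firstn j (r_conds rho)) costs ->
  exists D c', active Sy D /\
    cs_plus Sy (zeta Sy (lhs_inst Sy f R rho sigma)) (D (zeta Sy (subst sigma (label Sy a)))) c'.
Proof.
  intros Hn Hcs. destruct (conds_nonempty j _ Hn) as (a0 & b0 & rest & Hc).
  exists (fun x => Fterm (S j) (map ZT (firstn j BS) ++ [x])), (0 + list_sum costs).
  split. apply activeD. eapply len_pref; eauto.
  rewrite zeta_lhs. eapply cs_step_plus_trans; [apply (step2 a0 b0 rest Hc)|].
  exact (chain a0 b0 rest Hc j a b costs Hn Hcs).
Qed.

End Chain.

Lemma lin_bot (Q : list nat) n M k i : k < n -> i < M -> NoDup Q -> (forall x, In x Q -> n + M <= x) ->
  NoDup ((firstn k (seq 0 n) ++ Q ++ skipn (S k) (seq 0 n)) ++ (firstn i (seq n M) ++ skipn (S i) (seq n M))).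
Proof.
  intros Hk Hi HQ HQ2.
  apply NoDup_app.
  - apply NoDup_app; [rewrite firstn_seq'; apply seq_NoDup| apply NoDup_app|].
    + auto.
    + rewrite skipn_seq; apply seq_NoDup.
    + intros x H1 H2. apply HQ2 in H1. apply in_skipn_seq in H2. lia.
    + intros x H1 H2. apply in_firstn_seq in H1. apply in_app_or in H2 as [H2|H2].
      * apply HQ2 in H2; lia.
      * apply in_skipn_seq in H2; lia.
  - apply NoDup_seq_split; auto.
  - intros x H1 H2. apply in_seq_split in H2.
    apply in_app_or in H1 as [H1|H1]; [apply in_firstn_seq in H1; lia|].
    apply in_app_or in H1 as [H1|H1]; [apply HQ2 in H1; lia|apply in_skipn_seq in H1; lia].
Qed.

Lemma L_bot (Sy : system) (HR : strong_cctrs Sy) f R i rho us (sigma : nat -> gterm Sy) :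
  nth_error (rules Sy f) i = Some rho -> nth i R false = true ->
  Forall (lnf Sy) us -> NoDup (vars_list us) ->
  disjoint (vars_list us) (vars_list (r_args rho)) ->
  ~ unifiable (App f (map (erase Sy) us)) (App f (r_args rho)) ->
  wf_g Sy (App (f, R) (map (subst sigma) us)) ->
  cs_step Sy (zeta Sy (App (f, R) (map (subst sigma) us)))
             (zeta Sy (App (f, clear_bit R i) (map (subst sigma) us))) 0.
Proof.
  intros Hrule HRi Hlus Hnus Hd Hnu Hw.
  pose proof (rule_of Sy f i rho HR Hrule) as HCR.
  assert (Hi : i < m Sy f) by (unfold m; apply nth_error_Some; rewrite Hrule; discriminate).
  apply wf_app_inv in Hw as (HlR & Hlen & Hwus). simpl in HlR, Hlen.
  rewrite length_map in Hlen.
  assert (Hwu : Forall (wf_g Sy) us).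
  { rewrite Forall_forall in *. intros u Hu. apply (wf_subst_inv _ _ sigma u).
    apply Hwus. apply in_map; auto. }
  destruct HCR as (Hlen' & Hwl & _ & _ & Hcl & _ & Hlin & _).
  unfold linear in Hlin. rewrite vars_App in Hlin.
  assert (HCL : Forall (CL Sy) (r_args rho)).
  { rewrite Forall_forall in *. intros l Hl. apply clash; auto. eapply NoDup_vars_list_elem; eauto. }
  set (n := ar Sy f). set (M := m Sy f).
  destruct (clash_list Sy (r_args rho) us HCL) as [[k [Hk HA]]|[th Hth]]; auto.
  { etransitivity; [exact Hlen'|symmetry; exact Hlen]. }
  2: { exfalso. apply Hnu. exists th. simpl. rewrite Hth. reflexivity. }
  destruct (HA (n + M)) as (v & psi0 & Hap & Hv1 & Hv2 & Hv3).
  assert (Hkn : k < n) by (unfold n; rewrite <- Hlen'; exact Hk).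
  set (th := fun x => if x <? n then zeta Sy (subst sigma (nth x us (Var 0)))
                      else if x <? n + M then star Sy (nth (x - n) R false)
                      else subst (fun y => zeta Sy (sigma y)) (psi0 x)).
  assert (HE1 : map (subst th) (repl (map Var (seq 0 n)) (S k) [v]) = map (fun u => zeta Sy (subst sigma u)) us).
  { rewrite map_repl, map_map.
    assert (E1 : map (fun x => subst th (Var x)) (seq 0 n) = map (fun u => zeta Sy (subst sigma u)) us).
    { unfold n. rewrite <- Hlen. apply map_seq_nth with (d := Var 0). intros x Hx. simpl. unfold th.
      rewrite Nat.sub_0_r. destruct (Nat.ltb_spec x n); auto. exfalso. unfold n in *. lia. }
    rewrite E1. cbn [map].
    rewrite (subst_ext _ (fun x => subst (fun y => zeta Sy (sigma y)) (psi0 x))).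
    * rewrite <- subst_subst, Hv3, <- zeta_subst.
      change (zeta Sy (subst sigma (nth k us (Var 0)))) with ((fun u => zeta Sy (subst sigma u)) (nth k us (Var 0))).
      rewrite <- map_nth. apply repl_nth_same. rewrite length_map. lia.
    * intros x Hx. apply Hv1 in Hx. unfold th. destruct (Nat.ltb_spec x n); try lia.
      destruct (Nat.ltb_spec x (n + M)); auto; lia. }
  assert (HE2 : map (subst th) (map Var (seq n M)) = map (star Sy) R).
  { rewrite map_map. unfold M. rewrite <- HlR. apply map_seq_nth with (d := false). intros x Hx. simpl. unfold th.
    destruct (Nat.ltb_spec x n); try lia. destruct (Nat.ltb_spec x (n + M)); auto. exfalso. unfold M in *. lia. }
  eapply cs_root_eq with (th := th).
  - split; cycle 1.
    + eapply (xi_6 Sy f (S i) rho (seq n M) (seq 0 n) (S k) (nth k (r_args rho) (Var 0)) v); eauto; try lia.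
      * rewrite Nat.sub_succ, Nat.sub_0_r; auto.
      * rewrite length_seq; auto.
      * rewrite length_seq; auto.
      * rewrite Nat.sub_succ, Nat.sub_0_r. apply nth_error_nth'. lia.
    + unfold linear. rewrite vars_App, flat_map_app, !repl_S, !flat_map_app, !firstn_map, !skipn_map, !flat_map_vars_Var.
      cbn [flat_map]. rewrite !app_nil_r. apply lin_bot; auto.
  - cbn [subst zeta fst snd]. f_equal. rewrite map_app, HE1, map_repl, HE2, map_map. f_equal.
    apply repl_star_same; auto. lia.
  - cbn [subst zeta fst snd]. f_equal. rewrite map_app, HE1, map_repl, HE2, map_map. f_equal.
    apply repl_clear. lia.
Qed.

Scheme lstep_mut := Induction for lstep Sort Prop
with lsteps_mut := Induction for lsteps Sort Prop
with lconds_mut := Induction for lconds Sort Prop.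

Definition Pconds (Sy : system) (sigma : nat -> gterm Sy) (cs : list (fterm Sy * fterm Sy)) (costs : list nat) : Prop :=
  forall V, (forall x, In x V -> wf_g Sy (sigma x)) -> good V cs ->
    Forall (fun ab => wf_f Sy (fst ab)) cs ->
    (forall x, In x (vars_list (map snd cs)) -> wf_g Sy (sigma x)) /\ condsim Sy sigma cs costs.

Lemma zeta_ctx (Sy : system) (g : gsym Sy) pre a post :
  zeta Sy (App g (pre ++ a :: post)) =
  App (HF (fst g)) (map (zeta Sy) pre ++ zeta Sy a :: (map (zeta Sy) post ++ map (star Sy) (snd g))).
Proof. cbn [zeta]. rewrite map_app. cbn [map]. rewrite <- app_assoc. reflexivity. Qed.

Lemma wf_ctx (Sy : system) (g : gsym Sy) pre a post :
  wf_g Sy (App g (pre ++ a :: post)) -> wf_g Sy a /\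
  (forall a', wf_g Sy a' -> wf_g Sy (App g (pre ++ a' :: post))) /\ S (length pre) <= ar Sy (fst g).
Proof.
  intros H. apply wf_app_inv in H as (H1 & H2 & H3).
  rewrite length_app in H2. simpl in H2.
  apply Forall_app in H3 as [H3 H4]. inversion H4; subst.
  repeat split; auto; try lia.
  intros a' Ha'. constructor; auto. rewrite length_app. simpl. lia.
  apply Forall_app; split; auto.
Qed.

Lemma active_zctx (Sy : system) (g : gsym Sy) pre post :
  S (length pre) <= ar Sy (fst g) ->
  active Sy (fun x => App (HF (fst g)) (map (zeta Sy) pre ++ x :: (map (zeta Sy) post ++ map (star Sy) (snd g)))).
Proof. intros H. apply active_pos. simpl. rewrite length_map. lia. Qed.

Lemma wf_clear (Sy : system) f R i args :
  wf_g Sy (App (f, R) args) -> wf_g Sy (App (f, clear_bit R i) args).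
Proof.
  intros H. apply wf_app_inv in H as (H1 & H2 & H3). constructor; auto. simpl in *.
  rewrite length_clear_bit; auto.
Qed.

Lemma wf_lhs_inv (Sy : system) f R rho sigma :
  wf_g Sy (lhs_inst Sy f R rho sigma) -> length R = m Sy f /\
  (forall x, In x (vars_list (r_args rho)) -> wf_g Sy (sigma x)).
Proof.
  intros H. unfold lhs_inst in H. apply wf_app_inv in H as (H1 & H2 & H3). split; auto.
  intros x Hx. unfold vars_list in Hx. apply in_flat_map in Hx as (l & Hl & Hx).
  rewrite Forall_forall in H3.
  assert (Hw : wf_g Sy (subst sigma (label Sy l))) by (apply H3; apply in_map_iff; eauto).
  apply wf_subst_inv in Hw as [_ Hw]. apply Hw. rewrite vars_label; auto.
Qed.

Lemma wf_inst (Sy : system) (sigma : nat -> gterm Sy) t V :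
  wf_f Sy t -> incl (vars t) V -> (forall x, In x V -> wf_g Sy (sigma x)) ->
  wf_g Sy (subst sigma (label Sy t)).
Proof.
  intros H1 H2 H3. apply wf_subst. apply wf_label; auto.
  intros x Hx. rewrite vars_label in Hx. apply H3; auto.
Qed.

Lemma Forall_firstn' {A} (P : A -> Prop) l j : Forall P l -> Forall P (firstn j l).
Proof. rewrite !Forall_forall. intros H x Hx. apply H. eapply in_firstn_l; eauto. Qed.

Lemma conds_facts (Sy : system) (HR : strong_cctrs Sy) f i rho :
  nth_error (rules Sy f) i = Some rho ->
  good (vars_list (r_args rho)) (r_conds rho) /\
  Forall (fun ab => wf_f Sy (fst ab)) (r_conds rho).
Proof.
  intros Hr. pose proof (rule_of Sy f i rho HR Hr) as HC.
  destruct HC as (_ & _ & _ & Hwc & _ & _ & _ & _ & _ & _ & Hva). split.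
  - apply good_of. intros j a b Hj. apply (Hva j a b Hj).
  - rewrite Forall_forall in *. intros ab Hab. apply Hwc; auto.
Qed.

Section Main.
Variable Sy : system.
Hypothesis HR : strong_cctrs Sy.

Definition PS (s t : gterm Sy) (c : nat) (_ : lstep Sy s t c) : Prop :=
  wf_g Sy s -> wf_g Sy t /\ cs_plus Sy (zeta Sy s) (zeta Sy t) c.
Definition PSS (s t : gterm Sy) (c : nat) (_ : lsteps Sy s t c) : Prop :=
  wf_g Sy s -> wf_g Sy t /\ cs_steps Sy (zeta Sy s) (zeta Sy t) c.
Definition PC sigma cs costs (_ : lconds Sy sigma cs costs) : Prop := Pconds Sy sigma cs costs.

Lemma main_step : forall s t c (H : lstep Sy s t c), PS s t c H.
Proof.
  apply (lstep_mut Sy PS PSS PC); unfold PS, PSS, PC.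
  - intros f R i rho us sigma Hr HRi Hlus Hnd Hd Hnu Hw. split.
    + apply wf_clear; auto.
    + eapply (cs_step_plus_trans _ _ _ _ 0 0); [eapply L_bot; eauto| constructor].
  - intros f R i rho sigma costs Hr HRi Hlc IHc Hw.
    destruct (wf_lhs_inv _ _ _ _ _ Hw) as [HlR HwV].
    destruct (conds_facts Sy HR f i rho Hr) as [Hgood Hwc].
    destruct (IHc _ HwV Hgood Hwc) as [Hwb Hcs].
    pose proof (rule_of Sy f i rho HR Hr) as HCR.
    split.
    + destruct HCR as (_ & _ & Hwr & _ & _ & _ & _ & _ & _ & Hvr & _).
      apply wf_inst with (V := vars_list (r_args rho) ++ vars_list (map snd (r_conds rho))); auto.
      intros x Hx. apply in_app_or in Hx as [Hx|Hx]; auto.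
    + eapply L_succ; eauto.
  - intros f R i rho sigma j costs a b u tau c Hr HRi Hlc IHc Hn Hlu Hlin Hd Hnu Hs IHs Hw.
    destruct (wf_lhs_inv _ _ _ _ _ Hw) as [HlR HwV].
    destruct (conds_facts Sy HR f i rho Hr) as [Hgood Hwc].
    destruct (IHc _ HwV (good_firstn _ _ _ Hgood) (Forall_firstn' _ _ _ Hwc)) as [Hwb Hcs].
    pose proof (rule_of Sy f i rho HR Hr) as HCR.
    assert (Hwa : wf_g Sy (subst sigma (label Sy a))).
    { pose proof HCR as (_ & _ & _ & _ & _ & _ & _ & _ & _ & _ & Hva).
      apply wf_inst with (V := vars_list (r_args rho) ++ vars_list (firstn j (map snd (r_conds rho)))).
      - rewrite Forall_forall in Hwc. apply (Hwc (a, b)). eapply nth_error_In; eauto.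
      - eapply Hva; eauto.
      - intros x Hx. apply in_app_or in Hx as [Hx|Hx]; auto. apply Hwb. rewrite <- firstn_map; auto. }
    destruct (IHs Hwa) as [Hwu Hst].
    apply wf_subst_inv in Hwu as [Hwu _].
    split.
    + unfold lhs_inst in *. apply wf_clear; auto.
    + eapply L_fail; eauto.
  - intros g pre a a' post c H IH Hw.
    destruct (wf_ctx _ _ _ _ _ Hw) as (Hwa & Hrep & Hlen).
    destruct (IH Hwa) as [Hwa' Hp]. split; auto.
    rewrite !zeta_ctx. exact (active_plus Sy _ _ _ _ (active_zctx Sy g pre post Hlen) Hp).
  - intros; split; auto; constructor.
  - intros s u t c1 c2 H1 IH1 H2 IH2 Hw.
    destruct (IH1 Hw) as [Hwu Hp]; destruct (IH2 Hwu) as [Hwt Hq]. split; auto.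
    eapply cs_steps_trans; eauto. apply cs_plus_steps; auto.
  - intros sigma V _ _ _. split; simpl; auto. intros x [].
  - intros sigma a b rest c costs Hs IHs Hr IHr V HV Hg Hwf.
    simpl in Hg. destruct Hg as [Hia Hg'].
    inversion Hwf as [|? ? Hwa Hwf']; subst.
    assert (Hwla : wf_g Sy (subst sigma (label Sy a))) by (eapply wf_inst; eauto).
    destruct (IHs Hwla) as [Hwb Hst].
    apply wf_subst_inv in Hwb as [_ Hwb]. rewrite vars_label in Hwb.
    destruct (IHr (V ++ vars b)) as [Hw2 Hcs]; auto.
    { intros x Hx. apply in_app_or in Hx as [Hx|Hx]; [auto| apply Hwb; auto]. }
    split.
    + intros x Hx. unfold vars_list in Hx. simpl in Hx. apply in_app_or in Hx as [Hx|Hx]; [apply Hwb; auto|apply Hw2; unfold vars_list; auto].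
    + simpl. split; auto.
Qed.

Lemma main_steps : forall s t c, lsteps Sy s t c ->
  wf_g Sy s -> wf_g Sy t /\ cs_steps Sy (zeta Sy s) (zeta Sy t) c.
Proof.
  induction 1.
  - intros; split; auto; constructor.
  - intros Hw. destruct (main_step _ _ _ H Hw) as [Hwu Hp]; destruct (IHlsteps Hwu) as [Hwt Hq]. split; auto.
    eapply cs_steps_trans; eauto. apply cs_plus_steps; auto.
Qed.

Lemma main_conds : forall sigma cs costs, lconds Sy sigma cs costs -> Pconds Sy sigma cs costs.
Proof.
  induction 1.
  - intros V _ _ _. split; simpl; auto. intros x [].
  - intros V HV Hg Hwf.
    simpl in Hg. destruct Hg as [Hia Hg'].
    inversion Hwf as [|? ? Hwa Hwf']; subst.
    assert (Hwla : wf_g Sy (subst sigma (label Sy a))) by (eapply wf_inst; eauto).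
    destruct (main_steps _ _ _ H Hwla) as [Hwb Hst].
    apply wf_subst_inv in Hwb as [_ Hwb]. rewrite vars_label in Hwb.
    destruct (IHlconds (V ++ vars b)) as [Hw2 Hcs]; auto.
    { intros x Hx. apply in_app_or in Hx as [Hx|Hx]; [auto| apply Hwb; auto]. }
    split.
    + intros x Hx. unfold vars_list in Hx. simpl in Hx. apply in_app_or in Hx as [Hx|Hx]; [apply Hwb; auto|apply Hw2; unfold vars_list; auto].
    + simpl. split; auto.
Qed.
End Main.

Lemma lsub_sim (Sy : system) (HR : strong_cctrs Sy) s t : lsub Sy s t -> wf_g Sy s ->
  wf_g Sy t /\ exists D c, active Sy D /\ cs_plus Sy (zeta Sy s) (D (zeta Sy t)) c.
Proof.
  induction 1 as [f R i rho sigma j costs a b Hr HRi Hlc Hn|g args a t Hin H IH]; intros Hw.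
  - destruct (wf_lhs_inv _ _ _ _ _ Hw) as [HlR HwV].
    destruct (conds_facts Sy HR f i rho Hr) as [Hgood Hwc].
    destruct (main_conds Sy HR _ _ _ Hlc _ HwV (good_firstn _ _ _ Hgood) (Forall_firstn' _ _ _ Hwc)) as [Hwb Hcs].
    pose proof (rule_of Sy f i rho HR Hr) as HCR.
    assert (Hwa : wf_g Sy (subst sigma (label Sy a))).
    { pose proof HCR as (_ & _ & _ & _ & _ & _ & _ & _ & _ & _ & Hva).
      apply wf_inst with (V := vars_list (r_args rho) ++ vars_list (firstn j (map snd (r_conds rho)))).
      - rewrite Forall_forall in Hwc. apply (Hwc (a, b)). eapply nth_error_In; eauto.
      - eapply Hva; eauto.
      - intros x Hx. apply in_app_or in Hx as [Hx|Hx]; auto. apply Hwb. rewrite <- firstn_map; auto. }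
    split; auto. eapply L_sub; eauto.
  - apply in_split in Hin as (pre & post & ->).
    destruct (wf_ctx _ _ _ _ _ Hw) as (Hwa & Hrep & Hlen).
    destruct (IH Hwa) as [Hwt (D & c & HD & Hp)]. split; auto.
    exists (fun x => App (HF (fst g)) (map (zeta Sy) pre ++ D x :: (map (zeta Sy) post ++ map (star Sy) (snd g)))), c.
    split.
    + apply (active_comp Sy (fun x => App (HF (fst g)) (map (zeta Sy) pre ++ x :: (map (zeta Sy) post ++ map (star Sy) (snd g)))) D); auto.
      apply active_zctx; auto.
    + rewrite zeta_ctx. exact (active_plus Sy _ _ _ _ (active_zctx Sy g pre post Hlen) Hp).
Qed.

Theorem theorem5 (Sy : system) (HR : strong_cctrs Sy) (s : gterm Sy) (Hs : wf_g Sy s) :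
  (forall (t : gterm Sy) (N : nat), wf_g Sy t ->
     lsteps Sy s t N -> cs_steps Sy (zeta Sy s) (zeta Sy t) N) /\
  (linf Sy s ->
     exists u : nat -> hterm Sy, u 0 = zeta Sy s /\
       forall n, exists c, cs_step Sy (u n) (u (S n)) c).
Proof.
  split.
  - intros t N _ H. exact (proj2 (main_steps Sy HR _ _ _ H Hs)).
  - intros (u & Hu0 & Hstep).
    assert (Hwu : forall n, wf_g Sy (u n)).
    { induction n; [rewrite Hu0; auto|].
      destruct (Hstep n) as [[c Hc]|Hc].
      - exact (proj1 (main_step Sy HR _ _ _ Hc IHn)).
      - exact (proj1 (lsub_sim Sy HR _ _ Hc IHn)). }
    set (G := fun x => exists n C c, active Sy C /\ cs_steps Sy x (C (zeta Sy (u n))) c).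
    assert (Hsucc : forall x, G x -> exists y, (exists c, cs_step Sy x y c) /\ G y).
    { intros x (n & C & c & HC & Hst). inversion Hst as [x' Hx|x' y t c1 c2 H1 H2 Hx]; subst.
      - destruct (Hstep n) as [[c' Hc]|Hc].
        + destruct (main_step Sy HR _ _ _ Hc (Hwu n)) as [_ Hp].
          destruct (active_plus Sy C _ _ _ HC Hp) as (y & c1 & c2 & Hy1 & Hy2 & _).
          exists y. split; eauto. exists (S n), C, c2; auto.
        + destruct (lsub_sim Sy HR _ _ Hc (Hwu n)) as [_ (D & c' & HD & Hp)].
          destruct (active_plus Sy C _ _ _ HC Hp) as (y & c1 & c2 & Hy1 & Hy2 & _).
          exists y. split; eauto. exists (S n), (fun x => C (D x)), c2. split; auto.
          apply active_comp; auto.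
      - exists y. split; eauto. exists n, C, c2; auto. }
    assert (HG0 : G (zeta Sy s)).
    { exists 0, (fun x => x), 0. split; [apply active_id|]. rewrite Hu0. constructor. }
    set (T := {x | G x}).
    set (next := fun t : T =>
      let w := constructive_indefinite_description _ (Hsucc (proj1_sig t) (proj2_sig t)) in
      exist G (proj1_sig w) (proj2 (proj2_sig w)) : T).
    set (it := fix it (n : nat) : T := match n with 0 => exist G (zeta Sy s) HG0 | S k => next (it k) end).
    exists (fun n => proj1_sig (it n)). split; auto.
    intros n.
    exact (proj1 (proj2_sig (constructive_indefinite_description _ (Hsucc (proj1_sig (it n)) (proj2_sig (it n)))))).
Qed.
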